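(* Let $\Gamma$ be a metric graph as described in the context. A function $u\colon\Gamma\to\mathbb{R}$ is convex if and only if $u$ is a viscosity sub-solution of the problem \[ u''=0 \text{ on the edges of }\Gamma,\qquad \min_{\mathrm{e},\bar{\mathrm{e}}\in\mathrm{E}_{\mathrm{v}}}\Big\{\frac{\partial u}{\partial x_{\mathrm{e}}}(\mathrm{v})+\frac{\partial u}{\partial x_{\bar{\mathrm{e}}}}(\mathrm{v})\Big\}=0 \text{ for interior vertices } \mathrm{v},\qquad u(\mathrm{v})=\lim_{x\to\mathrm{v}}u(x)\text{ for terminal vertices }\mathrm{v}. \]
   Context: $\Gamma$ is a metric graph: a finite, connected, simple graph with vertex set $\mathrm{V}$ and edge set $\mathrm{E}$ (bounded degrees $\ge1$), each edge $\mathrm{e}$ identified with an interval $[0,\ell_{\mathrm{e}}]$ via an orientation (initial vertex $\mathrm{e}_-$ at $0$, terminal vertex $\mathrm{e}_+$ at $\ell_{\mathrm{e}}$). $\Gamma$ is a connected compact metric space with path distance $d$, with $d(x,y)=|x-y|$ for points on the same edge; $[x,y]$ is the minimal path between $x$ and $y$. $\mathrm{E}_{\mathrm{v}}$ is the set of edges incident to $\mathrm{v}$; a vertex is interior if its degree exceeds $1$, terminal otherwise. The ingoing derivative at $\mathrm{v}$ along $\mathrm{e}$ is $\frac{\partial u}{\partial x_{\mathrm{e}}}(\mathrm{v})=u_{\mathrm{e}}'(\mathrm{v})$ if $\mathrm{v}=\mathrm{e}_-$ and $-u_{\mathrm{e}}'(\mathrm{v})$ if $\mathrm{v}=\mathrm{e}_+$.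 A function $u$ is convex if $u(z)\le\frac{d(y,z)}{d(x,y)}u(x)+\frac{d(x,z)}{d(x,y)}u(y)$ for all $x,y\in\Gamma$ and $z\in[x,y]$. An upper semicontinuous $u$ is a viscosity sub-solution of the problem if: for every $x_0\in\Gamma\setminus\mathrm{V}$, $\delta>0$ and $\varphi\in C^2(x_0-\delta,x_0+\delta)$ with $\varphi(x_0)=u(x_0)$ and $\varphi\ge u$ on $(x_0-\delta,x_0+\delta)$, one has $\varphi''(x_0)\ge0$; and for every interior vertex $\mathrm{v}$, $\mathrm{e},\bar{\mathrm{e}}\in\mathrm{E}_{\mathrm{v}}$ and $\varphi\in C^1(\mathrm{e}\cup\bar{\mathrm{e}})$ with $\varphi(\mathrm{v})=u(\mathrm{v})$ and $\varphi\ge u$ on $\mathrm{e}\cup\bar{\mathrm{e}}$, one has $\frac{\partial \varphi}{\partial x_{\mathrm{e}}}(\mathrm{v})+\frac{\partial \varphi}{\partial x_{\bar{\mathrm{e}}}}(\mathrm{v})\ge0$. *)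

(* Defs.v *)
From Stdlib Require Import Reals Lra.
From Coquelicot Require Import Coquelicot.
Open Scope R_scope.

(* A finite (combinatorial) graph with oriented edges and edge lengths.
   Vertices are 0..nV-1, edges 0..nE-1; edge e goes from src e (coordinate 0)
   to tgt e (coordinate len e). *)
Record graph_data := MkGraph {
  nV : nat;
  nE : nat;
  src : nat -> nat;
  tgt : nat -> nat;
  len : nat -> R
}.

(* Points of the metric graph: a vertex, or an interior point of an edge
   given by its coordinate t in (0, len e). *)
Inductive point :=
| PV (v : nat)
| PE (e : nat) (t : R).

Definition valid_point (G : graph_data) (x : point) : Prop :=
  match x with
  | PV v => (v < nV G)%nat
  | PE e t => (e < nE G)%nat /\ 0 < t < len G e
  end.

Definition pt (G : graph_data) (e : nat) (t : R) : point :=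
  if Rle_dec t 0 then PV (src G e)
  else if Rle_dec (len G e) t then PV (tgt G e)
  else PE e t.

Definition incident (G : graph_data) (v e : nat) : Prop :=
  (e < nE G)%nat /\ (src G e = v \/ tgt G e = v).

Inductive walk (G : graph_data) : nat -> nat -> R -> Prop :=
| walk_nil v : (v < nV G)%nat -> walk G v v 0
| walk_cons v w e r :
    (e < nE G)%nat ->
    src G e = v -> walk G (tgt G e) w r -> walk G v w (len G e + r)
| walk_cons_rev v w e r :
    (e < nE G)%nat ->
    tgt G e = v -> walk G (src G e) w r -> walk G v w (len G e + r).

Definition exit_to (G : graph_data) (x : point) (v : nat) (a : R) : Prop :=
  match x with
  | PV w => v = w /\ a = 0
  | PE e t => (v = src G e /\ a = t) \/ (v = tgt G e /\ a = len G e - t)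
  end.

Definition path_length (G : graph_data) (x y : point) (r : R) : Prop :=
  (exists vx vy a b r', exit_to G x vx a /\ exit_to G y vy b /\
                        walk G vx vy r' /\ r = a + r' + b)
  \/ (exists e t s, x = PE e t /\ y = PE e s /\ r = Rabs (t - s)).

Definition dist (G : graph_data) (x y : point) : R :=
  real (Glb_Rbar (path_length G x y)).

(* Standing assumptions on a metric graph: finite, connected, simple,
   degrees >= 1, positive lengths, and d(x,y) = |x - y| on a common edge. *)
Definition is_metric_graph (G : graph_data) : Prop :=
  (forall e, (e < nE G)%nat ->
     (src G e < nV G)%nat /\ (tgt G e < nV G)%nat /\ src G e <> tgt G e
     /\ 0 < len G e) /\
  (forall e f, (e < nE G)%nat -> (f < nE G)%nat ->
     ((src G e = src G f /\ tgt G e = tgt G f) \/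
      (src G e = tgt G f /\ tgt G e = src G f)) -> e = f) /\
  (forall v, (v < nV G)%nat -> exists e, incident G v e) /\
  (forall v w, (v < nV G)%nat -> (w < nV G)%nat -> exists r, walk G v w r) /\
  (forall e t s, (e < nE G)%nat -> 0 <= t <= len G e -> 0 <= s <= len G e ->
     dist G (pt G e t) (pt G e s) = Rabs (t - s)).

(* z belongs to [x,y]: z lies on a minimal path from x to y. *)
Definition in_segment (G : graph_data) (x y z : point) : Prop :=
  dist G x z + dist G z y = dist G x y.

Definition convex_on_graph (G : graph_data) (u : point -> R) : Prop :=
  forall x y z, valid_point G x -> valid_point G y -> valid_point G z ->
    x <> y -> in_segment G x y z ->
    u z <= dist G y z / dist G x y * u x + dist G x z / dist G x y * u y.

Definition usc_on_graph (G : graph_data) (u : point -> R) : Prop :=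
  forall x, valid_point G x -> forall eps, 0 < eps ->
    exists delta, 0 < delta /\
      forall y, valid_point G y -> dist G x y < delta -> u y < u x + eps.

Definition C2_on (a b : R) (phi phi1 phi2 : R -> R) : Prop :=
  forall t, a < t < b ->
    is_derive phi t (phi1 t) /\ is_derive phi1 t (phi2 t) /\ continuous phi2 t.

Definition C1_on_closed (a b : R) (phi phi1 : R -> R) : Prop :=
  forall t, a <= t <= b -> is_derive phi t (phi1 t) /\ continuous phi1 t.

Definition interior_vertex (G : graph_data) (v : nat) : Prop :=
  (v < nV G)%nat /\ exists e f, e <> f /\ incident G v e /\ incident G v f.

Definition ingoing_deriv (G : graph_data) (v e : nat) (phi1 : R -> R) : R :=
  if Nat.eq_dec (src G e) v then phi1 0 else - phi1 (len G e).

Definition vcoord (G : graph_data) (v e : nat) : R :=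
  if Nat.eq_dec (src G e) v then 0 else len G e.

Definition viscosity_subsolution (G : graph_data) (u : point -> R) : Prop :=
  usc_on_graph G u /\
  (forall e t0 delta, (e < nE G)%nat -> 0 < t0 < len G e -> 0 < delta ->
     0 <= t0 - delta -> t0 + delta <= len G e ->
     forall phi phi1 phi2, C2_on (t0 - delta) (t0 + delta) phi phi1 phi2 ->
       phi t0 = u (PE e t0) ->
       (forall t, t0 - delta < t < t0 + delta -> u (PE e t) <= phi t) ->
       0 <= phi2 t0) /\
  (forall v e f, interior_vertex G v -> incident G v e -> incident G v f ->
     e <> f ->
     forall phie phie1 phif phif1,
       C1_on_closed 0 (len G e) phie phie1 ->
       C1_on_closed 0 (len G f) phif phif1 ->
       phie (vcoord G v e) = u (PV v) -> phif (vcoord G v f) = u (PV v) ->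
       (forall t, 0 <= t <= len G e -> u (pt G e t) <= phie t) ->
       (forall t, 0 <= t <= len G f -> u (pt G f t) <= phif t) ->
       0 <= ingoing_deriv G v e phie1 + ingoing_deriv G v f phif1).

(* Main.v *)
Require Import Defs.
From Stdlib Require Import Reals Lra Lia List Classical.
From Coquelicot Require Import Coquelicot.
Require Import Defs.
Open Scope R_scope.

Definition usc1 (g : R -> R) (a b : R) : Prop :=
  forall s, a <= s <= b -> forall eps, 0 < eps -> exists delta, 0 < delta /\
    forall s', a <= s' <= b -> Rabs (s' - s) < delta -> g s' < g s + eps.

Lemma lub_exists_gt (E : R -> Prop) (c d : R) :
  is_lub E c -> 0 < d -> exists t, E t /\ c - d < t /\ t <= c.
Proof.
  intros [Hub Hl] Hd.
  destruct (Classical_Prop.classic (exists t, E t /\ c - d < t)) as [[t [Et Ht]]|Hn].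
  - exists t; repeat split; auto.
  - assert (c <= c - d); [|lra]. apply Hl. intros t Et.
    destruct (Rle_lt_dec t (c - d)); auto. exfalso; apply Hn; eauto.
Qed.

Lemma usc1_bounded g a b : a <= b -> usc1 g a b ->
  exists M, forall s, a <= s <= b -> g s <= M.
Proof.
  intros Hab Hu.
  set (A := fun t => a <= t <= b /\ exists M, forall s, a <= s <= t -> g s <= M).
  assert (HA : A a). { split; [lra|]. exists (g a). intros s Hs. replace s with a by lra; lra. }
  assert (Hb : bound A). { exists b. intros t [Ht _]; lra. }
  destruct (completeness A Hb (ex_intro _ a HA)) as [c Hc].
  assert (Hac : a <= c). { apply Hc; auto. }
  assert (Hcb : c <= b). { apply Hc. intros t [Ht _]; lra. }
  destruct (Hu c (conj Hac Hcb) 1 Rlt_0_1) as [d [Hd Hud]].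
  destruct (lub_exists_gt A c d Hc Hd) as [t [[Ht [Mt HMt]] [Htd Htc]]].
  set (t' := Rmin b (c + d/2)).
  assert (HAt' : A t').
  { split. unfold t'; unfold Rmin; destruct Rle_dec; lra.
    exists (Rmax Mt (g c + 1)). intros s Hs.
    destruct (Rle_lt_dec s t).
    - eapply Rle_trans; [apply HMt; lra| apply Rmax_l].
    - eapply Rle_trans; [|apply Rmax_r]. left. apply Hud.
      + unfold t' in Hs; unfold Rmin in Hs; destruct Rle_dec; lra.
      + unfold t' in Hs; unfold Rmin in Hs; destruct Rle_dec; split_Rabs; lra. }
  assert (t' <= c) by (apply Hc; auto).
  assert (Hcb' : c = b) by (unfold t' in H; unfold Rmin in H; destruct Rle_dec; lra).
  destruct HAt' as [_ [M HM]]. exists M. intros s Hs. apply HM.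
  unfold t'; unfold Rmin; destruct Rle_dec; lra.
Qed.

Lemma usc1_max g a b : a <= b -> usc1 g a b ->
  exists c, a <= c <= b /\ forall s, a <= s <= b -> g s <= g c.
Proof.
  intros Hab Hu.
  destruct (usc1_bounded g a b Hab Hu) as [M0 HM0].
  set (I := fun y => exists s, a <= s <= b /\ y = g s).
  assert (HbI : bound I). { exists M0. intros y [s [Hs ->]]. auto. }
  destruct (completeness I HbI (ex_intro _ (g a) (ex_intro _ a (conj (conj (Rle_refl a) Hab) eq_refl)))) as [Ms HMs].
  assert (Hle : forall s, a <= s <= b -> g s <= Ms).
  { intros s Hs. apply HMs. exists s; auto. }
  assert (Happ : forall eps, 0 < eps -> exists s, a <= s <= b /\ g s > Ms - eps).
  { intros eps He. destruct (lub_exists_gt I Ms eps HMs He) as [y [[s [Hs ->]] [Hy _]]].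
    exists s; split; auto; lra. }
  set (B := fun t => a <= t <= b /\ forall eps, 0 < eps -> exists s, t <= s <= b /\ g s > Ms - eps).
  assert (HB : B a). { split; [lra|]. intros eps He. destruct (Happ eps He) as [s [Hs Hg]]. exists s; split; [lra|auto]. }
  assert (HbB : bound B). { exists b. intros t [Ht _]; lra. }
  destruct (completeness B HbB (ex_intro _ a HB)) as [c Hc].
  assert (Hac : a <= c). { apply Hc; auto. }
  assert (Hcb : c <= b). { apply Hc. intros t [Ht _]; lra. }
  exists c; split; [lra|]. intros s Hs.
  assert (Ms <= g c); [|specialize (Hle s Hs); lra].
  destruct (Rle_lt_dec Ms (g c)) as [|Hlt]; auto. exfalso.
  set (e0 := (Ms - g c)/2).
  assert (He0 : 0 < e0) by (unfold e0; lra).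
  destruct (Hu c (conj Hac Hcb) e0 He0) as [d [Hd Hud]].
  destruct (lub_exists_gt B c d Hc Hd) as [t [[Ht HBt] [Htd Htc]]].
  assert (Hfar : forall eps, 0 < eps -> eps <= e0 -> exists s, c + d <= s <= b /\ g s > Ms - eps).
  { intros eps He Hee. destruct (HBt eps He) as [s' [Hs' Hg]]. exists s'. split; [|auto].
    split; [|lra]. destruct (Rle_lt_dec (c + d) s'); auto. exfalso.
    assert (g s' < g c + e0). { apply Hud. lra. split_Rabs; lra. }
    unfold e0 in *; lra. }
  assert (HBc : B (c + d/2)).
  { destruct (Hfar e0 He0 (Rle_refl _)) as [s1 [Hs1 _]].
    split; [lra|]. intros eps He.
    destruct (Hfar (Rmin eps e0)) as [s2 [Hs2 Hg2]].
    { unfold Rmin; destruct Rle_dec; lra. }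
    { apply Rmin_r. }
    exists s2. split; [lra|]. assert (Rmin eps e0 <= eps) by apply Rmin_l. lra. }
  assert (c + d/2 <= c) by (apply Hc; auto). lra.
Qed.

Fixpoint Kf (L : R) (S : list R) (s : R) : R :=
  match S with
  | nil => 0
  | sk :: S' => Rmin (s * (L - sk)) (sk * (L - s)) + Kf L S' s
  end.

Fixpoint KL (L : R) (S : list R) : R :=
  match S with nil => 0 | sk :: S' => Rabs (L - sk) + Rabs sk + KL L S' end.

Lemma KL_nonneg L S : 0 <= KL L S.
Proof. induction S; simpl; [lra|]. pose proof (Rabs_pos (L - a)); pose proof (Rabs_pos a); lra. Qed.

Lemma Kf_lip L S s s' : Rabs (Kf L S s - Kf L S s') <= KL L S * Rabs (s - s').
Proof.
  induction S as [|sk S IH]; simpl.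
  - rewrite Rminus_0_r, Rabs_R0; lra.
  - assert (H1 : Rabs (Rmin (s * (L - sk)) (sk * (L - s)) - Rmin (s' * (L - sk)) (sk * (L - s')))
                 <= Rabs (s * (L - sk) - s' * (L - sk)) + Rabs (sk * (L - s) - sk * (L - s'))).
    { unfold Rmin. destruct (Rle_dec (s * (L - sk)) (sk * (L - s)));
      destruct (Rle_dec (s' * (L - sk)) (sk * (L - s'))); split_Rabs; lra. }
    replace (s * (L - sk) - s' * (L - sk)) with ((L - sk) * (s - s')) in H1 by ring.
    replace (sk * (L - s) - sk * (L - s')) with ((- sk) * (s - s')) in H1 by ring.
    rewrite !Rabs_mult, Rabs_Ropp in H1.
    eapply Rle_trans; [|right; ring_simplify; reflexivity].
    replace (Rmin (s * (L - sk)) (sk * (L - s)) + Kf L S s -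
      (Rmin (s' * (L - sk)) (sk * (L - s')) + Kf L S s')) with
      ((Rmin (s * (L - sk)) (sk * (L - s)) - Rmin (s' * (L - sk)) (sk * (L - s'))) + (Kf L S s - Kf L S s')) by ring.
    eapply Rle_trans; [apply Rabs_triang|]. nra.
Qed.

Lemma Kf_0 L S : List.Forall (fun sk => 0 <= sk <= L) S -> Kf L S 0 = 0.
Proof.
  induction 1; simpl; auto. rewrite IHForall. unfold Rmin; destruct Rle_dec; nra.
Qed.

Lemma Kf_L L S : List.Forall (fun sk => 0 <= sk <= L) S -> Kf L S L = 0.
Proof.
  induction 1; simpl; auto. rewrite IHForall. unfold Rmin; destruct Rle_dec; nra.
Qed.

Lemma kink_bounds L S c : 0 < L -> exists aL bL aR bR,
  (forall s, Kf L S s <= aL + bL * s) /\ (forall s, Kf L S s <= aR + bR * s) /\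
  Kf L S c = aL + bL * c /\ Kf L S c = aR + bR * c /\ bR <= bL /\
  (In c S -> bR + L <= bL).
Proof.
  intros HL. induction S as [|sk S IH]; simpl.
  - exists 0, 0, 0, 0. repeat split; intros; simpl in *; try lra; try contradiction.
  - destruct IH as [aL [bL [aR [bR [H1 [H2 [H3 [H4 [H5 H6]]]]]]]]].
    assert (HA : forall s, Rmin (s * (L - sk)) (sk * (L - s)) <= s * (L - sk)) by (intros; apply Rmin_l).
    assert (HB : forall s, Rmin (s * (L - sk)) (sk * (L - s)) <= sk * (L - s)) by (intros; apply Rmin_r).
    destruct (Rtotal_order c sk) as [Hlt|[Heq|Hgt]].
    + assert (Hm : Rmin (c * (L - sk)) (sk * (L - c)) = c * (L - sk)).
      { apply Rmin_left. nra. }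
      exists aL, (bL + (L - sk)), aR, (bR + (L - sk)). repeat split.
      * intros s. specialize (H1 s); specialize (HA s); nra.
      * intros s. specialize (H2 s); specialize (HA s); nra.
      * rewrite Hm, H3; ring.
      * rewrite Hm, H4; ring.
      * lra.
      * intros [E|E]; [lra|]. specialize (H6 E); lra.
    + subst sk.
      assert (Hm : Rmin (c * (L - c)) (c * (L - c)) = c * (L - c)) by (apply Rmin_left; lra).
      exists aL, (bL + (L - c)), (aR + c * L), (bR - c). repeat split.
      * intros s. specialize (H1 s); specialize (HA s); nra.
      * intros s. specialize (H2 s); specialize (HB s); nra.
      * rewrite Hm, H3; ring.
      * rewrite Hm, H4; ring.
      * lra.
      * intros _. lra.
    + assert (Hm : Rmin (c * (L - sk)) (sk * (L - c)) = sk * (L - c)).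
      { apply Rmin_right. nra. }
      exists (aL + sk * L), (bL - sk), (aR + sk * L), (bR - sk). repeat split.
      * intros s. specialize (H1 s); specialize (HB s); nra.
      * intros s. specialize (H2 s); specialize (HB s); nra.
      * rewrite Hm, H3; ring.
      * rewrite Hm, H4; ring.
      * lra.
      * intros [E|E]; [lra|]. specialize (H6 E); lra.
Qed.

Definition Qone (f : R -> R) (L s0 : R) : Prop :=
  forall C beta, (forall s, 0 <= s <= L -> f s <= f s0 + beta * (s - s0) + C * (s - s0)^2) -> 0 <= C.

Definition Qtwo (f : R -> R) (L s0 : R) : Prop :=
  forall C bL bR,
    (forall s, s0 <= s <= L -> f s <= f s0 + bR * (s - s0) + C * (s - s0)^2) ->
    (forall s, 0 <= s <= s0 -> f s <= f s0 + bL * (s0 - s) + C * (s - s0)^2) ->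
    0 <= bL + bR.

Lemma max_principle (f : R -> R) (L : R) (S : list R) :
  0 < L -> List.Forall (fun sk => 0 <= sk <= L) S -> usc1 f 0 L ->
  (forall s0, 0 < s0 < L -> Qone f L s0 \/ (In s0 S /\ Qtwo f L s0)) ->
  forall z, 0 <= z <= L -> f z <= (1 - z / L) * f 0 + (z / L) * f L.
Proof.
  intros HL HS Hu HQ z Hz.
  set (l := fun s => f 0 + s / L * (f L - f 0)).
  replace ((1 - z / L) * f 0 + z / L * f L) with (l z) by (unfold l; field; lra).
  destruct (Rle_lt_dec (f z) (l z)) as [|Hgt]; auto. exfalso.
  set (gap := f z - l z).
  assert (Hgap : 0 < gap) by (unfold gap; lra).
  set (ep := gap / (2 * (z * (L - z) + 1))).
  assert (Hzz : 0 <= z * (L - z)) by nra.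
  assert (Hep : 0 < ep) by (unfold ep; apply Rdiv_lt_0_compat; lra).
  assert (Hep2 : ep * (z * (L - z)) < gap / 2).
  { assert (ep * (z * (L - z) + 1) = gap / 2) by (unfold ep; field; lra). nra. }
  set (et := gap / (2 * (Rabs (Kf L S z) + 1))).
  assert (Het : 0 < et) by (unfold et; apply Rdiv_lt_0_compat; pose proof (Rabs_pos (Kf L S z)); lra).
  assert (Het2 : et * Kf L S z < gap / 2).
  { assert (et * Rabs (Kf L S z) < gap / 2).
    { pose proof (Rabs_pos (Kf L S z)).
      assert (et * (Rabs (Kf L S z) + 1) = gap / 2) by (unfold et; field; lra). nra. }
    pose proof (Rle_abs (Kf L S z)). nra. }
  set (q := fun s => l s + ep * (s * (L - s)) + et * Kf L S s).
  set (g := fun s => f s - q s).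
  assert (Hg0 : g 0 = 0).
  { unfold g, q, l. rewrite Kf_0 by auto. field; lra. }
  assert (HgL : g L = 0).
  { unfold g, q, l. rewrite Kf_L by auto. field; lra. }
  assert (Hgz : 0 < g z) by (assert (gap = f z - l z) by reflexivity; unfold g, q; lra).
  set (Lq := Rabs (f L - f 0) / L + ep * L + et * KL L S).
  assert (HLq : 0 <= Lq).
  { unfold Lq. pose proof (KL_nonneg L S). pose proof (Rabs_pos (f L - f 0)).
    assert (0 <= Rabs (f L - f 0) / L) by (apply Rmult_le_pos; [lra|left; apply Rinv_0_lt_compat; lra]). nra. }
  assert (Hqlip : forall s s', 0 <= s <= L -> 0 <= s' <= L -> Rabs (q s' - q s) <= Lq * Rabs (s' - s)).
  { intros s s' Hs Hs'. unfold q, l, Lq.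
    pose proof (Kf_lip L S s' s) as HK.
    replace (f 0 + s' / L * (f L - f 0) + ep * (s' * (L - s')) + et * Kf L S s' -
      (f 0 + s / L * (f L - f 0) + ep * (s * (L - s)) + et * Kf L S s)) with
      ((s' - s) * ((f L - f 0) / L) + ep * ((s' - s) * (L - s - s')) + et * (Kf L S s' - Kf L S s)) by (field; lra).
    eapply Rle_trans; [apply Rabs_triang|].
    eapply Rle_trans; [apply Rplus_le_compat_r; apply Rabs_triang|].
    rewrite !Rabs_mult. unfold Rdiv. rewrite Rabs_mult. rewrite (Rabs_right ep) by lra. rewrite (Rabs_right et) by lra.
    rewrite (Rabs_inv L). rewrite (Rabs_right L) by lra.
    assert (Rabs (L - s - s') <= L) by (split_Rabs; lra).
    pose proof (Rabs_pos (s' - s)). pose proof (Rabs_pos (f L - f 0)).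
    assert (0 <= / L) by (left; apply Rinv_0_lt_compat; lra).
    assert (ep * (Rabs (s'-s) * Rabs (L-s-s')) <= ep * (L * Rabs (s'-s))) by (apply Rmult_le_compat_l; [lra|]; nra).
    assert (et * Rabs (Kf L S s' - Kf L S s) <= et * (KL L S * Rabs (s'-s))) by (apply Rmult_le_compat_l; lra).
    nra. }
  assert (Hgu : usc1 g 0 L).
  { intros s Hs eps He. destruct (Hu s Hs (eps/2)) as [d [Hd Hud]]; [lra|].
    exists (Rmin d (eps / (2 * (Lq + 1)))). split.
    { apply Rmin_pos; auto. apply Rdiv_lt_0_compat; lra. }
    intros s' Hs' Hss. unfold g.
    assert (H1 : f s' < f s + eps / 2) by (apply Hud; auto; eapply Rlt_le_trans; [apply Hss|apply Rmin_l]).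
    assert (H2 : Rabs (q s' - q s) < eps / 2).
    { eapply Rle_lt_trans; [apply Hqlip; auto|].
      assert (Rabs (s' - s) < eps / (2 * (Lq + 1))) by (eapply Rlt_le_trans; [apply Hss|apply Rmin_r]).
      apply (Rle_lt_trans _ ((Lq + 1) * Rabs (s' - s))). pose proof (Rabs_pos (s' - s)); nra.
      apply (Rmult_lt_reg_r (/ (Lq + 1))). apply Rinv_0_lt_compat; lra.
      replace ((Lq + 1) * Rabs (s' - s) * / (Lq + 1)) with (Rabs (s' - s)) by (field; lra).
      replace (eps / 2 * / (Lq + 1)) with (eps / (2 * (Lq + 1))) by (field; lra). auto. }
    split_Rabs; lra. }
  destruct (usc1_max g 0 L (Rlt_le _ _ HL) Hgu) as [c [Hc Hmax]].
  set (m := g c).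
  assert (Hm : g z <= m) by (apply Hmax; auto).
  assert (Hc0 : 0 < c < L).
  { assert (Hgc : 0 < g c) by (unfold m in Hm; lra).
    split; [destruct (Req_dec c 0) as [E|E]; [rewrite E, Hg0 in Hgc; lra| lra]
           | destruct (Req_dec c L) as [E|E]; [rewrite E, HgL in Hgc; lra|lra]]. }
  assert (Hfq : forall s, 0 <= s <= L -> f s <= q s + m).
  { intros s Hs. specialize (Hmax s Hs). assert (g s = f s - q s) by reflexivity.
    assert (m = g c) by reflexivity. lra. }
  assert (Hfc : f c = q c + m) by (unfold m, g; ring).
  destruct (kink_bounds L S c HL) as [aL [bL [aR [bR [H1 [H2 [H3 [H4 [H5 H6]]]]]]]]].
  set (b0 := (f L - f 0) / L + ep * (L - 2 * c)).
  assert (HPsi : forall aa bb, Kf L S c = aa + bb * c -> (forall s, Kf L S s <= aa + bb * s) ->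
            forall s, 0 <= s <= L -> f s <= f c + (b0 + et * bb) * (s - c) + (- ep) * (s - c)^2).
  { intros aa bb Hc1 Hb s Hs. specialize (Hfq s Hs). specialize (Hb s).
    rewrite Hfc. unfold q, l, b0 in *. rewrite Hc1.
    assert (et * Kf L S s <= et * (aa + bb * s)) by (apply Rmult_le_compat_l; lra).
    assert (E : f 0 + s / L * (f L - f 0) + ep * (s * (L - s)) + et * (aa + bb * s) + m =
       f 0 + c / L * (f L - f 0) + ep * (c * (L - c)) + et * (aa + bb * c) + m +
       ((f L - f 0) / L + ep * (L - 2 * c) + et * bb) * (s - c) + - ep * (s - c) ^ 2) by (field; lra).
    lra. }
  destruct (HQ c Hc0) as [HQ1|[Hin HQ2]].
  - specialize (HQ1 (- ep) (b0 + et * bL) (HPsi aL bL H3 H1)). lra.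
  - specialize (H6 Hin).
    assert (0 <= (- (b0 + et * bL)) + (b0 + et * bR)); [|nra].
    apply (HQ2 (- ep)).
    + intros s Hs. apply (HPsi aR bR H4 H2). lra.
    + intros s Hs. replace (f c + - (b0 + et * bL) * (c - s) + - ep * (s - c) ^ 2) with
        (f c + (b0 + et * bL) * (s - c) + - ep * (s - c) ^ 2) by ring.
      apply (HPsi aL bL H3 H1). lra.
Qed.

Section Basics.
Variable G : graph_data.
Hypothesis HG : is_metric_graph G.
Set Default Proof Using "All".

Lemma Hedge : forall e, (e < nE G)%nat ->
     (src G e < nV G)%nat /\ (tgt G e < nV G)%nat /\ src G e <> tgt G e /\ 0 < len G e.
Proof. destruct HG as [H _]; exact H. Qed.

Lemma Hlen : forall e, (e < nE G)%nat -> 0 < len G e.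
Proof. intros e He. apply (Hedge e He). Qed.

Lemma Hdist : forall e t s, (e < nE G)%nat -> 0 <= t <= len G e -> 0 <= s <= len G e ->
     dist G (pt G e t) (pt G e s) = Rabs (t - s).
Proof. destruct HG as [_ [_ [_ [_ H]]]]; exact H. Qed.

Lemma pt_src e : pt G e 0 = PV (src G e).
Proof. unfold pt. destruct (Rle_dec 0 0); [auto|lra]. Qed.

Lemma pt_tgt e : 0 < len G e -> pt G e (len G e) = PV (tgt G e).
Proof. intros. unfold pt. destruct (Rle_dec (len G e) 0); [lra|]. destruct (Rle_dec (len G e) (len G e)); [auto|lra]. Qed.

Lemma pt_in e t : 0 < t < len G e -> pt G e t = PE e t.
Proof. intros. unfold pt. destruct (Rle_dec t 0); [lra|]. destruct (Rle_dec (len G e) t); [lra|auto]. Qed.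

Lemma pt_valid e t : (e < nE G)%nat -> 0 <= t <= len G e -> valid_point G (pt G e t).
Proof.
  intros He Ht. destruct (Hedge e He) as [H1 [H2 _]]. unfold pt.
  destruct (Rle_dec t 0); simpl; auto. destruct (Rle_dec (len G e) t); simpl; auto. split; auto; lra.
Qed.

Lemma pt_cases e t : (e < nE G)%nat -> 0 <= t <= len G e ->
  (t = 0 /\ pt G e t = PV (src G e)) \/ (t = len G e /\ pt G e t = PV (tgt G e)) \/
  (0 < t < len G e /\ pt G e t = PE e t).
Proof.
  intros He Ht. pose proof (Hlen e He).
  destruct (Req_dec t 0) as [->|H0]. left; split; auto; apply pt_src.
  destruct (Req_dec t (len G e)) as [->|H1]. right; left; split; auto; apply pt_tgt; auto.
  right; right. split. lra. apply pt_in; lra.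
Qed.

Lemma pt_inj e t s : (e < nE G)%nat -> 0 <= t <= len G e -> 0 <= s <= len G e ->
  pt G e t = pt G e s -> t = s.
Proof.
  intros He Ht Hs E. destruct (Hedge e He) as [_ [_ [Hne _]]].
  destruct (pt_cases e t He Ht) as [[-> E1]|[[-> E1]|[Ht' E1]]];
  destruct (pt_cases e s He Hs) as [[-> E2]|[[-> E2]|[Hs' E2]]];
  try lra; rewrite E1 in E; rewrite E2 in E; try congruence; try (inversion E; congruence); try (inversion E; lra).
Qed.

Lemma pt_vertex e t v : (e < nE G)%nat -> 0 <= t <= len G e -> pt G e t = PV v ->
  (t = 0 /\ src G e = v) \/ (t = len G e /\ tgt G e = v).
Proof.
  intros He Ht E. destruct (pt_cases e t He Ht) as [[-> E1]|[[-> E1]|[Ht' E1]]]; rewrite E1 in E;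
  inversion E; auto.
Qed.

Lemma pt_edge e t f s : (e < nE G)%nat -> 0 <= t <= len G e -> pt G e t = PE f s ->
  f = e /\ s = t /\ 0 < t < len G e.
Proof.
  intros He Ht E. destruct (pt_cases e t He Ht) as [[-> E1]|[[-> E1]|[Ht' E1]]]; rewrite E1 in E;
  inversion E; subst; auto.
Qed.

Definition minlen : R := fold_right Rmin 1 (map (len G) (seq 0 (nE G))).

Lemma minlen_le e : (e < nE G)%nat -> minlen <= len G e.
Proof.
  intros He. unfold minlen.
  assert (In (len G e) (map (len G) (seq 0 (nE G)))).
  { apply in_map. apply in_seq. lia. }
  revert H. generalize (map (len G) (seq 0 (nE G))). intros l. induction l; simpl; intros H; [contradiction|].
  destruct H as [->|H]. apply Rmin_l. eapply Rle_trans; [apply Rmin_r|auto].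
Qed.

Lemma minlen_pos : 0 < minlen.
Proof.
  unfold minlen. assert (forall x, In x (map (len G) (seq 0 (nE G))) -> 0 < x).
  { intros x Hx. apply in_map_iff in Hx. destruct Hx as [e [<- He]]. apply in_seq in He. apply Hlen. lia. }
  revert H. generalize (map (len G) (seq 0 (nE G))). intros l. induction l; simpl; intros H; [lra|].
  apply Rmin_glb_lt. apply H; auto. apply IHl. auto.
Qed.

Lemma walk_nonneg v w r : walk G v w r -> 0 <= r.
Proof. induction 1; [lra| pose proof (Hlen e H); lra | pose proof (Hlen e H); lra]. Qed.

Lemma walk_valid v w r : walk G v w r -> (v < nV G)%nat /\ (w < nV G)%nat.
Proof.
  induction 1; auto; destruct (Hedge e H) as [Hs1 [Hs2 _]]; subst; tauto.
Qed.

Lemma walk_app v w z r1 r2 : walk G v w r1 -> walk G w z r2 -> walk G v z (r1 + r2).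
Proof.
  induction 1; intros Hw.
  - rewrite Rplus_0_l; auto.
  - replace (len G e + r + r2) with (len G e + (r + r2)) by ring. eapply walk_cons; eauto.
  - replace (len G e + r + r2) with (len G e + (r + r2)) by ring. eapply walk_cons_rev; eauto.
Qed.

Lemma walk_edge_fw e : (e < nE G)%nat -> walk G (src G e) (tgt G e) (len G e).
Proof.
  intros He. destruct (Hedge e He) as [_ [H2 _]]. rewrite <- (Rplus_0_r (len G e)).
  eapply walk_cons; eauto. constructor; auto.
Qed.

Lemma walk_edge_bw e : (e < nE G)%nat -> walk G (tgt G e) (src G e) (len G e).
Proof.
  intros He. destruct (Hedge e He) as [H1 _]. rewrite <- (Rplus_0_r (len G e)).
  eapply walk_cons_rev; eauto. constructor; auto.
Qed.

Lemma walk_rev v w r : walk G v w r -> walk G w v r.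
Proof.
  induction 1.
  - constructor; auto.
  - subst v. rewrite Rplus_comm. eapply walk_app; eauto. apply walk_edge_bw; auto.
  - subst v. rewrite Rplus_comm. eapply walk_app; eauto. apply walk_edge_fw; auto.
Qed.

Lemma walk_minlen v w r : walk G v w r -> v <> w -> minlen <= r.
Proof.
  induction 1; intros Hne; [congruence| |];
  pose proof (minlen_le e H); pose proof (walk_nonneg _ _ _ H1); lra.
Qed.

Lemma glb_facts (E : R -> Prop) : (exists r, E r) -> (forall r, E r -> 0 <= r) ->
  0 <= real (Glb_Rbar E) /\ (forall r, E r -> real (Glb_Rbar E) <= r) /\
  (forall eps, 0 < eps -> exists r, E r /\ r < real (Glb_Rbar E) + eps) /\
  (forall c, (forall r, E r -> c <= r) -> c <= real (Glb_Rbar E)).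
Proof.
  intros [r0 Hr0] Hpos. destruct (Glb_Rbar_correct E) as [Hlb Hgr].
  destruct (Glb_Rbar E) as [g| |] eqn:Eg.
  - simpl. assert (Hlb' : forall r, E r -> g <= r) by (intros r Hr; apply (Hlb r Hr)).
    assert (Hgr' : forall c, (forall r, E r -> c <= r) -> c <= g).
    { intros c Hc. apply (Hgr (Finite c)). intros r Hr. simpl. apply Hc; auto. }
    split; [apply Hgr'; auto|]. split; [auto|]. split; [|auto].
    intros eps He. apply NNPP. intros Hn.
      assert (g + eps <= g); [|lra]. apply Hgr'. intros r Hr.
      destruct (Rle_lt_dec (g + eps) r); auto. exfalso; apply Hn; eauto.
  - exfalso. specialize (Hlb r0 Hr0). simpl in Hlb. auto.
  - exfalso. assert (Rbar_le (Finite 0) m_infty) by (apply Hgr; intros r Hr; simpl; auto). simpl in H; auto.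
Qed.

Lemma exit_nonneg x v a : valid_point G x -> exit_to G x v a -> 0 <= a.
Proof.
  destruct x as [w|e t]; simpl; intros Hx Hex.
  - destruct Hex; lra.
  - destruct Hx. destruct Hex as [[_ ->]|[_ ->]]; lra.
Qed.

Lemma pl_nonneg x y r : valid_point G x -> valid_point G y -> path_length G x y r -> 0 <= r.
Proof.
  intros Hx Hy [[vx [vy [a [b [r' [H1 [H2 [H3 ->]]]]]]]]|[e [t [s [_ [_ ->]]]]]].
  - pose proof (exit_nonneg _ _ _ Hx H1); pose proof (exit_nonneg _ _ _ Hy H2);
    pose proof (walk_nonneg _ _ _ H3); lra.
  - apply Rabs_pos.
Qed.

Lemma exit_some x : valid_point G x -> exists v a, exit_to G x v a /\ (v < nV G)%nat.
Proof.
  destruct x as [w|e t]; simpl; intros Hx.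
  - exists w, 0. auto.
  - destruct Hx as [He _]. exists (src G e), t. split; auto. apply (Hedge e He).
Qed.

Lemma Hconn : forall v w, (v < nV G)%nat -> (w < nV G)%nat -> exists r, walk G v w r.
Proof. destruct HG as [_ [_ [_ [H _]]]]; exact H. Qed.

Lemma pl_exists x y : valid_point G x -> valid_point G y -> exists r, path_length G x y r.
Proof.
  intros Hx Hy. destruct (exit_some x Hx) as [vx [a [H1 H1']]].
  destruct (exit_some y Hy) as [vy [b [H2 H2']]].
  destruct (Hconn vx vy H1' H2') as [r' Hw].
  exists (a + r' + b). left. exists vx, vy, a, b, r'. auto.
Qed.

Lemma dist_facts x y : valid_point G x -> valid_point G y ->
  0 <= dist G x y /\ (forall r, path_length G x y r -> dist G x y <= r) /\
  (forall eps, 0 < eps -> exists r, path_length G x y r /\ r < dist G x y + eps) /\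
  (forall c, (forall r, path_length G x y r -> c <= r) -> c <= dist G x y).
Proof.
  intros Hx Hy. unfold dist. apply glb_facts. apply pl_exists; auto. intros r Hr. apply (pl_nonneg x y r Hx Hy Hr).
Qed.

Lemma pl_sym x y r : path_length G x y r -> path_length G y x r.
Proof.
  intros [[vx [vy [a [b [r' [H1 [H2 [H3 ->]]]]]]]]|[e [t [s [-> [-> ->]]]]]].
  - left. exists vy, vx, b, a, r'. repeat split; auto. apply walk_rev; auto. ring.
  - right. exists e, s, t. repeat split. apply Rabs_minus_sym.
Qed.

Lemma dist_sym x y : dist G x y = dist G y x.
Proof.
  unfold dist. f_equal. apply Glb_Rbar_eqset. intros r; split; apply pl_sym.
Qed.

Lemma pl_trans x y w r1 r2 : valid_point G y ->
  path_length G x y r1 -> path_length G y w r2 -> exists r, r <= r1 + r2 /\ path_length G x w r.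
Proof.
  intros Hy P1 P2.
  destruct P1 as [[vx [vy [a [b [r' [H1 [H2 [H3 ->]]]]]]]]|[e [t [s [-> [-> ->]]]]]];
  destruct P2 as [[vy2 [vw [b2 [c [r'' [K1 [K2 [K3 ->]]]]]]]]|[e2 [t2 [s2 [E2 [-> ->]]]]]].
  - destruct y as [y|e t]; simpl in H2, K1.
    + destruct H2 as [-> ->]; destruct K1 as [-> ->].
      exists (a + (r' + r'') + c). split; [lra|]. left. exists vx, vw, a, c, (r' + r'').
      repeat split; auto. eapply walk_app; [exact H3|exact K3].
    + destruct Hy as [He Ht].
      destruct H2 as [[-> ->]|[-> ->]]; destruct K1 as [[-> ->]|[-> ->]].
      * exists (a + (r' + r'') + c). split; [lra|]. left. exists vx, vw, a, c, (r' + r'').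
        repeat split; auto. eapply walk_app; [exact H3|exact K3].
      * exists (a + (r' + (len G e + r'')) + c). split; [lra|]. left. exists vx, vw, a, c, (r' + (len G e + r'')).
        repeat split; auto. eapply walk_app; [exact H3|]. eapply walk_app; [apply walk_edge_fw; auto|exact K3].
      * exists (a + (r' + (len G e + r'')) + c). split; [lra|]. left. exists vx, vw, a, c, (r' + (len G e + r'')).
        repeat split; auto. eapply walk_app; [exact H3|]. eapply walk_app; [apply walk_edge_bw; auto|exact K3].
      * exists (a + (r' + r'') + c). split; [lra|]. left. exists vx, vw, a, c, (r' + r'').
        repeat split; auto. eapply walk_app; [exact H3|exact K3].
  - subst y. simpl in H2. destruct H2 as [[-> ->]|[-> ->]].
    + exists (a + r' + s2). split. split_Rabs; lra. left. exists vx, (src G e2), a, s2, r'. simpl; auto.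
    + exists (a + r' + (len G e2 - s2)). split. split_Rabs; lra.
      left. exists vx, (tgt G e2), a, (len G e2 - s2), r'. simpl; auto.
  - simpl in K1. destruct K1 as [[-> ->]|[-> ->]].
    + exists (t + r'' + c). split. split_Rabs; lra. left. exists (src G e), vw, t, c, r''. simpl; auto.
    + exists (len G e - t + r'' + c). split. split_Rabs; lra.
      left. exists (tgt G e), vw, (len G e - t), c, r''. simpl; auto.
  - inversion E2; subst. exists (Rabs (t - s2)). split. split_Rabs; lra. right. exists e2, t, s2; auto.
Qed.

Lemma dist_triangle x y w : valid_point G x -> valid_point G y -> valid_point G w ->
  dist G x w <= dist G x y + dist G y w.
Proof.
  intros Hx Hy Hw.
  destruct (dist_facts x y Hx Hy) as [_ [_ [A1 _]]].
  destruct (dist_facts y w Hy Hw) as [_ [_ [A2 _]]].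
  destruct (dist_facts x w Hx Hw) as [_ [B _]].
  apply le_epsilon. intros eps He.
  destruct (A1 (eps/2)) as [r1 [P1 R1]]; [lra|].
  destruct (A2 (eps/2)) as [r2 [P2 R2]]; [lra|].
  destruct (pl_trans x y w r1 r2 Hy P1 P2) as [r [Hr P]].
  specialize (B r P). lra.
Qed.

Definition cm (x : point) : R :=
  match x with PV _ => minlen | PE e t => Rmin t (len G e - t) end.

Lemma cm_pos x : valid_point G x -> 0 < cm x.
Proof.
  destruct x as [v|e t]; simpl; intros Hx. apply minlen_pos. destruct Hx. apply Rmin_glb_lt; lra.
Qed.

Lemma exit_cm x v a : valid_point G x -> exit_to G x v a -> (exists e t, x = PE e t) -> cm x <= a.
Proof.
  intros Hx Hex [e [t ->]]. simpl in *. destruct Hex as [[_ ->]|[_ ->]]. apply Rmin_l. apply Rmin_r.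
Qed.

Definition c1 (x y : point) : R :=
  match x, y with
  | PE e t, PE f s => if Nat.eq_dec e f then Rmin (Rmin (cm x) (cm y)) (Rabs (t - s)) else Rmin (cm x) (cm y)
  | _, _ => Rmin (cm x) (cm y)
  end.

Lemma c1_pos x y : valid_point G x -> valid_point G y -> x <> y -> 0 < c1 x y.
Proof.
  intros Hx Hy Hne. pose proof (cm_pos x Hx). pose proof (cm_pos y Hy).
  assert (0 < Rmin (cm x) (cm y)) by (apply Rmin_glb_lt; auto).
  destruct x as [v|e t]; destruct y as [w|f s]; simpl; auto.
  destruct (Nat.eq_dec e f); auto. subst. apply Rmin_glb_lt; auto.
  apply Rabs_pos_lt. intro E. apply Hne. f_equal. lra.
Qed.

Lemma pl_lb x y r : valid_point G x -> valid_point G y -> x <> y -> path_length G x y r -> c1 x y <= r.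
Proof.
  intros Hx Hy Hne P.
  assert (Hc : c1 x y <= Rmin (cm x) (cm y)).
  { destruct x as [v|e t]; destruct y as [w|f s]; simpl; try lra. destruct (Nat.eq_dec e f); [apply Rmin_l|lra]. }
  pose proof (Rmin_l (cm x) (cm y)). pose proof (Rmin_r (cm x) (cm y)).
  destruct P as [[vx [vy [a [b [r' [H1 [H2 [H3 ->]]]]]]]]|[e [t [s [-> [-> ->]]]]]].
  - pose proof (exit_nonneg _ _ _ Hx H1); pose proof (exit_nonneg _ _ _ Hy H2);
    pose proof (walk_nonneg _ _ _ H3).
    destruct x as [v|e t].
    + destruct y as [w|f s].
      * simpl in H1, H2. destruct H1 as [-> ->]; destruct H2 as [-> ->].
        assert (Hvw : v <> w) by congruence. pose proof (walk_minlen _ _ _ H3 Hvw).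
        simpl in *. lra.
      * pose proof (exit_cm _ _ _ Hy H2 (ex_intro _ f (ex_intro _ s eq_refl))). lra.
    + pose proof (exit_cm _ _ _ Hx H1 (ex_intro _ e (ex_intro _ t eq_refl))). lra.
  - simpl. destruct (Nat.eq_dec e e); [apply Rmin_r|congruence].
Qed.

Lemma dist_pos x y : valid_point G x -> valid_point G y -> x <> y -> 0 < dist G x y.
Proof.
  intros Hx Hy Hne. destruct (dist_facts x y Hx Hy) as [_ [_ [_ D]]].
  pose proof (c1_pos x y Hx Hy Hne). pose proof (D (c1 x y) (fun r => pl_lb x y r Hx Hy Hne)). lra.
Qed.

Lemma dist_self x : valid_point G x -> dist G x x = 0.
Proof.
  intros Hx. destruct (dist_facts x x Hx Hx) as [D0 [D1 _]].
  assert (path_length G x x 0).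
  { destruct x as [v|e t].
    - left. exists v, v, 0, 0, 0. simpl. repeat split; auto. constructor; auto. ring.
    - right. exists e, t, t. repeat split. rewrite Rminus_diag, Rabs_R0; auto. }
  specialize (D1 0 H). lra.
Qed.

End Basics.

Lemma shiftp (phi : R -> R) t0 x d : is_derive phi (t0 + x) d -> is_derive (fun y => phi (t0 + y)) x d.
Proof.
  intros H.
  assert (Hg : is_derive (fun y => t0 + y) x 1) by (auto_derive; [auto|ring]).
  pose proof (is_derive_comp phi (fun y => t0 + y) x d 1 H Hg) as K.
  simpl in K. unfold scal in K; simpl in K. unfold mult in K; simpl in K. rewrite Rmult_1_l in K. exact K.
Qed.

Lemma shiftm (phi : R -> R) t0 x d : is_derive phi (t0 - x) d -> is_derive (fun y => phi (t0 - y)) x (- d).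
Proof.
  intros H.
  assert (Hg : is_derive (fun y => t0 - y) x (-1)) by (auto_derive; [auto|ring]).
  pose proof (is_derive_comp phi (fun y => t0 - y) x d (-1) H Hg) as K.
  simpl in K. unfold scal in K; simpl in K. unfold mult in K; simpl in K. replace (-d) with (-1 * d) by ring. exact K.
Qed.

Lemma cont_eps f x : continuous f x -> forall eps, 0 < eps -> exists delta, 0 < delta /\
  forall y, Rabs (y - x) < delta -> Rabs (f y - f x) < eps.
Proof.
  intros H eps He. apply continuity_pt_filterlim in H. rewrite continuity_pt_locally in H.
  destruct (H (mkposreal eps He)) as [d Hd]. exists d. split. apply cond_pos.
  intros y Hy. apply (Hd y). exact Hy.
Qed.

Lemma deriv_upper f x l : is_derive f x l -> forall eps, 0 < eps -> exists delta, 0 < delta /\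
  forall h, 0 < Rabs h < delta -> f (x + h) <= f x + l * h + eps * Rabs h.
Proof.
  intros H eps He. apply is_derive_Reals in H. destruct (H eps He) as [d Hd].
  exists d. split. apply cond_pos. intros h [Hh1 Hh2].
  assert (Hh0 : h <> 0) by (intro E; rewrite E, Rabs_R0 in Hh1; lra).
  specialize (Hd h Hh0 Hh2).
  assert (E : f (x + h) - f x - l * h = ((f (x + h) - f x) / h - l) * h) by (field; auto).
  assert (Rabs (f (x + h) - f x - l * h) <= eps * Rabs h).
  { rewrite E, Rabs_mult. apply Rmult_le_compat_r. apply Rabs_pos. lra. }
  split_Rabs; lra.
Qed.

Lemma MVT_pos (f df : R -> R) (a h : R) : 0 < h ->
  (forall x, a < x < a + h -> is_derive f x (df x)) ->
  (forall x, a <= x <= a + h -> is_derive f x (df x)) ->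
  exists c, a <= c <= a + h /\ f (a + h) - f a = df c * h.
Proof.
  intros Hh _ Hd.
  destruct (MVT_gen f a (a + h) df) as [c [Hc E]].
  - intros x Hx. rewrite Rmin_left in Hx by lra. rewrite Rmax_right in Hx by lra. apply Hd; lra.
  - intros x Hx. rewrite Rmin_left in Hx by lra. rewrite Rmax_right in Hx by lra.
    apply continuity_pt_filterlim. apply (ex_derive_continuous f x). exists (df x). apply Hd; lra.
  - rewrite Rmin_left in Hc by lra. rewrite Rmax_right in Hc by lra. exists c. split; auto.
    rewrite E. ring.
Qed.

Lemma is_derive_plus' f g x a b : is_derive f x a -> is_derive g x b -> is_derive (fun y => f y + g y) x (a + b).
Proof. intros; apply (is_derive_plus f g x a b); auto. Qed.
Lemma is_derive_minus' f g x a b : is_derive f x a -> is_derive g x b -> is_derive (fun y => f y - g y) x (a - b).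
Proof. intros; apply (is_derive_minus f g x a b); auto. Qed.
Lemma is_derive_sq k x : is_derive (fun y => k * y^2) x (2 * k * x).
Proof. auto_derive; [auto|ring]. Qed.
Lemma is_derive_quad a b c x0 x : is_derive (fun y => a + b * (y - x0) + c * (y - x0)^2) x (b + 2 * c * (x - x0)).
Proof. auto_derive; [auto|ring]. Qed.

Section Forward.
Variable G : graph_data.
Hypothesis HG : is_metric_graph G.
Variable u : point -> R.
Hypothesis Hconv : convex_on_graph G u.
Set Default Proof Using "All".

Lemma conv_edge e t1 t t2 : (e < nE G)%nat -> 0 <= t1 -> t1 < t -> t < t2 -> t2 <= len G e ->
  u (pt G e t) <= (t2 - t) / (t2 - t1) * u (pt G e t1) + (t - t1) / (t2 - t1) * u (pt G e t2).
Proof.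
  intros He H1 H2 H3 H4.
  assert (V : forall s, 0 <= s <= len G e -> valid_point G (pt G e s)) by (intros; apply pt_valid; auto).
  pose proof (Hconv (pt G e t1) (pt G e t2) (pt G e t) (V t1 ltac:(lra)) (V t2 ltac:(lra)) (V t ltac:(lra))) as K.
  rewrite !(Hdist G HG) in K by (auto; lra).
  replace (Rabs (t2 - t)) with (t2 - t) in K by (split_Rabs; lra).
  replace (Rabs (t1 - t2)) with (t2 - t1) in K by (split_Rabs; lra).
  replace (Rabs (t1 - t)) with (t - t1) in K by (split_Rabs; lra).
  apply K.
  - intro E. apply (pt_inj G HG e t1 t2 He) in E; lra.
  - unfold in_segment. rewrite !(Hdist G HG) by (auto; lra). split_Rabs; lra.
Qed.

Lemma loc_PE e t y : valid_point G (PE e t) -> valid_point G y -> dist G (PE e t) y < cm G (PE e t) ->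
  exists s, 0 < s < len G e /\ y = PE e s /\ dist G (PE e t) y = Rabs (t - s).
Proof.
  intros Hx Hy Hd.
  destruct (dist_facts G HG _ _ Hx Hy) as [D0 [_ [D2 _]]].
  destruct (D2 (cm G (PE e t) - dist G (PE e t) y)) as [r [P Hr]]; [lra|].
  destruct P as [[vx [vy [a [b [r' [H1 [H2 [H3 ->]]]]]]]]|[e' [t' [s [E1 [-> ->]]]]]].
  - exfalso. pose proof (exit_cm G HG _ _ _ Hx H1 (ex_intro _ e (ex_intro _ t eq_refl))).
    pose proof (exit_nonneg G HG _ _ _ Hy H2). pose proof (walk_nonneg G HG _ _ _ H3). lra.
  - inversion E1; subst. exists s. simpl in Hy, Hx. destruct Hy as [He Hs]. destruct Hx as [_ Ht].
    split; auto. split; auto.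
    rewrite <- (pt_in G HG e' t') by lra. rewrite <- (pt_in G HG e' s) by lra. apply (Hdist G HG); auto; lra.
Qed.

Lemma loc_PV v y : valid_point G (PV v) -> valid_point G y -> dist G (PV v) y < minlen G ->
  y = PV v \/ exists e s, (e < nE G)%nat /\ 0 < s < len G e /\ y = PE e s /\
    ((src G e = v /\ dist G (PV v) y = s) \/ (tgt G e = v /\ dist G (PV v) y = len G e - s)).
Proof.
  intros Hx Hy Hd.
  destruct (dist_facts G HG _ _ Hx Hy) as [D0 [_ [D2 _]]].
  destruct (D2 (minlen G - dist G (PV v) y)) as [r [P Hr]]; [lra|].
  destruct P as [[vx [vy [a [b [r' [H1 [H2 [H3 ->]]]]]]]]|[e' [t' [s [E1 _]]]]]; [|discriminate].
  simpl in H1. destruct H1 as [-> ->].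
  pose proof (exit_nonneg G HG _ _ _ Hy H2). pose proof (walk_nonneg G HG _ _ _ H3).
  assert (vy = v). { destruct (Nat.eq_dec v vy) as [E|E]; auto. pose proof (walk_minlen G HG _ _ _ H3 E). lra. }
  subst vy. destruct y as [w|e s].
  - left. simpl in H2. destruct H2 as [-> _]; auto.
  - right. simpl in Hy. destruct Hy as [He Hs]. exists e, s. split; auto. split; auto. split; auto.
    simpl in H2. destruct H2 as [[E _]|[E _]].
    + left. split; [congruence|]. rewrite <- (pt_in G HG e s) by lra. rewrite E, <- (pt_src G HG e).
      rewrite (Hdist G HG) by (auto; lra). split_Rabs; lra.
    + right. split; [congruence|]. rewrite <- (pt_in G HG e s) by lra. rewrite E, <- (pt_tgt G HG e) by lra.
      rewrite (Hdist G HG) by (auto; lra). split_Rabs; lra.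
Qed.

Definition Bsum : R := fold_right Rplus 0 (map (fun e => Rabs (u (PV (src G e))) + Rabs (u (PV (tgt G e)))) (seq 0 (nE G))).

Lemma Bsum_ge e : (e < nE G)%nat -> Rabs (u (PV (src G e))) + Rabs (u (PV (tgt G e))) <= Bsum.
Proof.
  intros He. unfold Bsum.
  assert (In (Rabs (u (PV (src G e))) + Rabs (u (PV (tgt G e)))) (map (fun e => Rabs (u (PV (src G e))) + Rabs (u (PV (tgt G e)))) (seq 0 (nE G)))).
  { apply in_map with (f := fun e => Rabs (u (PV (src G e))) + Rabs (u (PV (tgt G e)))). apply in_seq. lia. }
  assert (Hp : forall x, In x (map (fun e => Rabs (u (PV (src G e))) + Rabs (u (PV (tgt G e)))) (seq 0 (nE G))) -> 0 <= x).
  { intros x Hx. apply in_map_iff in Hx. destruct Hx as [e' [<- _]].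
    pose proof (Rabs_pos (u (PV (src G e')))); pose proof (Rabs_pos (u (PV (tgt G e')))); lra. }
  revert H Hp. generalize (map (fun e => Rabs (u (PV (src G e))) + Rabs (u (PV (tgt G e)))) (seq 0 (nE G))).
  intros l. induction l; simpl; intros H Hp; [contradiction|].
  assert (0 <= fold_right Rplus 0 l).
  { clear -Hp. induction l; simpl; [lra|]. pose proof (Hp a0 (or_intror (or_introl eq_refl))).
    assert (0 <= fold_right Rplus 0 l); [apply IHl; intros; apply Hp; simpl in *; tauto|lra]. }
  destruct H as [<-|H]. pose proof (Hp _ (or_introl eq_refl)); lra.
  pose proof (Hp a (or_introl eq_refl)). specialize (IHl H (fun x Hx => Hp x (or_intror Hx))). lra.
Qed.

Lemma interp_eq w p X Y : 0 < w -> (w - p) / w * X + p / w * Y = X + p * ((Y - X) / w).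
Proof. intros; field; lra. Qed.

Lemma slope_le p Z K : 0 <= p -> Z <= K -> p * Z <= p * K.
Proof. intros; apply Rmult_le_compat_l; auto. Qed.

Lemma small_prod p K eps : 0 < p -> 0 <= K -> p < eps / (K + 1) -> p * K < eps.
Proof.
  intros Hp HK H. apply (Rmult_lt_compat_r (K + 1)) in H; [|lra].
  replace (eps / (K + 1) * (K + 1)) with eps in H by (field; lra). nra.
Qed.

Lemma conv_usc : usc_on_graph G u.
Proof.
  intros x Hx eps He. destruct x as [v|e t].
  - pose proof (minlen_pos G HG) as Hm.
    set (K := Rabs Bsum / minlen G).
    assert (HK : 0 <= K) by (unfold K; apply Rmult_le_pos; [apply Rabs_pos|left; apply Rinv_0_lt_compat; auto]).
    exists (Rmin (minlen G) (eps / (K + 1))). split.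
    { apply Rmin_glb_lt; auto. apply Rdiv_lt_0_compat; lra. }
    intros y Hy Hd. pose proof (Rmin_l (minlen G) (eps / (K + 1))). pose proof (Rmin_r (minlen G) (eps / (K + 1))).
    destruct (loc_PV v y Hx Hy ltac:(lra)) as [->|[e [s [He' [Hs [-> Hc]]]]]]; [lra|].
    pose proof (Hlen G HG e He') as Hl. pose proof (minlen_le G HG e He') as Hml.
    pose proof (Bsum_ge e He') as HB.
    assert (Hq : forall Y X, Rabs Y + Rabs X <= Bsum -> (Y - X) / len G e <= K).
    { intros Y X HYX. unfold K. apply Rle_trans with (Rabs Bsum / len G e).
      - unfold Rdiv. apply Rmult_le_compat_r. left; apply Rinv_0_lt_compat; lra.
        pose proof (Rle_abs Bsum). split_Rabs; lra.
      - unfold Rdiv. apply Rmult_le_compat_l. apply Rabs_pos. apply Rinv_le_contravar; auto. }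
    pose proof (conv_edge e 0 s (len G e) He' ltac:(lra) ltac:(lra) ltac:(lra) ltac:(lra)) as Hc'.
    rewrite (pt_in G HG e s) in Hc' by lra. rewrite (pt_src G HG e), (pt_tgt G HG e) in Hc' by lra.
    rewrite !Rminus_0_r in Hc'.
    destruct Hc as [[Es Ed]|[Et Ed]]; rewrite Ed in Hd.
    + rewrite Es in Hc'. rewrite interp_eq in Hc' by lra.
      assert (s * ((u (PV (tgt G e)) - u (PV v)) / len G e) <= s * K).
      { apply slope_le; [lra|]. apply Hq. rewrite <- Es. lra. }
      pose proof (small_prod s K eps ltac:(lra) HK ltac:(lra)). lra.
    + rewrite Et in Hc'.
      assert (E2 : (len G e - s) / len G e * u (PV (src G e)) + s / len G e * u (PV v) =
                   u (PV v) + (len G e - s) * ((u (PV (src G e)) - u (PV v)) / len G e)) by (field; lra).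
      rewrite E2 in Hc'.
      assert ((len G e - s) * ((u (PV (src G e)) - u (PV v)) / len G e) <= (len G e - s) * K).
      { apply slope_le; [lra|]. apply Hq. rewrite <- Et. lra. }
      pose proof (small_prod (len G e - s) K eps ltac:(lra) HK ltac:(lra)). lra.
  - pose proof Hx as [He' Ht]. pose proof (cm_pos G HG _ Hx) as Hcm.
    set (U := u (PE e t)). set (A := u (PV (src G e))). set (B := u (PV (tgt G e))).
    set (K := Rabs (B - U) / (len G e - t) + Rabs (A - U) / t).
    assert (HK1 : 0 <= Rabs (B - U) / (len G e - t)) by (apply Rmult_le_pos; [apply Rabs_pos|left; apply Rinv_0_lt_compat; lra]).
    assert (HK2 : 0 <= Rabs (A - U) / t) by (apply Rmult_le_pos; [apply Rabs_pos|left; apply Rinv_0_lt_compat; lra]).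
    assert (HK : 0 <= K) by (unfold K; lra).
    exists (Rmin (cm G (PE e t)) (eps / (K + 1))). split.
    { apply Rmin_glb_lt; auto. apply Rdiv_lt_0_compat; lra. }
    intros y Hy Hd. pose proof (Rmin_l (cm G (PE e t)) (eps / (K + 1))). pose proof (Rmin_r (cm G (PE e t)) (eps / (K + 1))).
    destruct (loc_PE e t y Hx Hy ltac:(lra)) as [s [Hs [-> Ed]]]. rewrite Ed in Hd.
    destruct (Rtotal_order s t) as [Hst|[Hst|Hst]].
    + pose proof (conv_edge e 0 s t He' ltac:(lra) ltac:(lra) ltac:(lra) ltac:(lra)) as Hc'.
      rewrite (pt_in G HG e s), (pt_in G HG e t) in Hc' by lra. rewrite (pt_src G HG e) in Hc'.
      rewrite !Rminus_0_r in Hc'. fold U A in Hc'.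
      assert (E2 : (t - s) / t * A + s / t * U = U + (t - s) * ((A - U) / t)) by (field; lra).
      rewrite E2 in Hc'.
      assert ((t - s) * ((A - U) / t) <= (t - s) * K).
      { apply slope_le; [lra|]. unfold K. assert ((A - U) / t <= Rabs (A - U) / t).
        { unfold Rdiv. apply Rmult_le_compat_r. left; apply Rinv_0_lt_compat; lra. apply Rle_abs. } lra. }
      rewrite Rabs_right in Hd by lra.
      pose proof (small_prod (t - s) K eps ltac:(lra) HK ltac:(lra)). lra.
    + subst. fold U. lra.
    + pose proof (conv_edge e t s (len G e) He' ltac:(lra) ltac:(lra) ltac:(lra) ltac:(lra)) as Hc'.
      rewrite (pt_in G HG e s), (pt_in G HG e t) in Hc' by lra. rewrite (pt_tgt G HG e) in Hc' by lra.
      fold U B in Hc'.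
      assert (E2 : (len G e - s) / (len G e - t) * U + (s - t) / (len G e - t) * B = U + (s - t) * ((B - U) / (len G e - t))) by (field; lra).
      rewrite E2 in Hc'.
      assert ((s - t) * ((B - U) / (len G e - t)) <= (s - t) * K).
      { apply slope_le; [lra|]. unfold K. assert ((B - U) / (len G e - t) <= Rabs (B - U) / (len G e - t)).
        { unfold Rdiv. apply Rmult_le_compat_r. left; apply Rinv_0_lt_compat; lra. apply Rle_abs. } lra. }
      rewrite Rabs_left in Hd by lra.
      pose proof (small_prod (s - t) K eps ltac:(lra) HK ltac:(lra)). lra.
Qed.

Lemma conv_edge_visc : forall e t0 delta, (e < nE G)%nat -> 0 < t0 < len G e -> 0 < delta ->
     0 <= t0 - delta -> t0 + delta <= len G e ->
     forall phi phi1 phi2, C2_on (t0 - delta) (t0 + delta) phi phi1 phi2 ->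
       phi t0 = u (PE e t0) ->
       (forall t, t0 - delta < t < t0 + delta -> u (PE e t) <= phi t) ->
       0 <= phi2 t0.
Proof.
  intros e t0 delta He Ht0 Hd H1 H2 phi phi1 phi2 HC Hphi Hle.
  destruct (Rle_lt_dec 0 (phi2 t0)) as [|Hk]; auto. exfalso.
  set (k := phi2 t0) in *.
  destruct (HC t0 ltac:(lra)) as [_ [_ Hcont]].
  destruct (cont_eps phi2 t0 Hcont (- k / 2)) as [eta [Heta Hphi2]]; [lra|].
  set (h := Rmin delta eta / 2).
  assert (Hh : 0 < h) by (unfold h; pose proof (Rmin_pos delta eta Hd Heta); lra).
  assert (Hhd : h < delta) by (unfold h; pose proof (Rmin_l delta eta); lra).
  assert (Hhe : h < eta) by (unfold h; pose proof (Rmin_r delta eta); lra).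
  set (H2f := fun y => phi (t0 + y) + phi (t0 - y) - k / 2 * y ^ 2).
  set (dH := fun y => phi1 (t0 + y) - phi1 (t0 - y) - k * y).
  assert (HdH : forall y, 0 <= y <= h -> is_derive H2f y (dH y)).
  { intros y Hy. unfold H2f, dH.
    replace (phi1 (t0 + y) - phi1 (t0 - y) - k * y) with ((phi1 (t0 + y) + - phi1 (t0 - y)) - 2 * (k / 2) * y) by field.
    apply is_derive_minus'; [apply is_derive_plus'|apply is_derive_sq].
    - apply shiftp. apply (HC (t0 + y)). lra.
    - apply shiftm. apply (HC (t0 - y)). lra. }
  destruct (MVT_pos H2f dH 0 h Hh (fun y Hy => HdH y ltac:(lra))) as [c [Hc Ec]].
  { intros y Hy. apply HdH; lra. }
  rewrite Rplus_0_l in Ec.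
  assert (HdHc : dH c <= 0).
  { unfold dH. destruct (Req_dec c 0) as [->|Hc0].
    - rewrite Rplus_0_r, Rminus_0_r. lra.
    - destruct (MVT_pos phi1 phi2 (t0 - c) (2 * c) ltac:(lra)) as [c' [Hc' Ec']].
      { intros y Hy. apply (HC y). lra. }
      { intros y Hy. apply (HC y). lra. }
      replace (t0 - c + 2 * c) with (t0 + c) in Ec' by ring.
      assert (Hp : phi2 c' < k / 2).
      { assert (Rabs (phi2 c' - phi2 t0) < - k / 2) by (apply Hphi2; split_Rabs; lra).
        fold k in H. split_Rabs; lra. }
      rewrite Ec'. nra. }
  assert (HH : H2f h <= H2f 0) by nra.
  unfold H2f in HH. rewrite Rplus_0_r, Rminus_0_r in HH.
  assert (Hk2 : k / 2 * h ^ 2 < 0) by (assert (0 < h ^ 2) by (apply pow_lt; lra); nra).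
  pose proof (conv_edge e (t0 - h) t0 (t0 + h) He ltac:(lra) ltac:(lra) ltac:(lra) ltac:(lra)) as Hc'.
  rewrite !(pt_in G HG e) in Hc' by lra.
  replace ((t0 + h - t0) / (t0 + h - (t0 - h))) with (/2) in Hc' by (field; lra).
  replace ((t0 - (t0 - h)) / (t0 + h - (t0 - h))) with (/2) in Hc' by (field; lra).
  pose proof (Hle (t0 - h) ltac:(lra)). pose proof (Hle (t0 + h) ltac:(lra)).
  lra.
Qed.

Definition ce (v e : nat) (h : R) : R := if Nat.eq_dec (src G e) v then h else len G e - h.

Lemma inc_cases v e : incident G v e -> src G e = v \/ (src G e <> v /\ tgt G e = v).
Proof. intros [_ [H|H]]; destruct (Nat.eq_dec (src G e) v); auto. Qed.

Lemma pt_vcoord v e : incident G v e -> pt G e (vcoord G v e) = PV v.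
Proof.
  intros Hi. pose proof Hi as [He _]. unfold vcoord. destruct (inc_cases v e Hi) as [E|[E1 E2]].
  - destruct (Nat.eq_dec (src G e) v); [|congruence]. rewrite (pt_src G HG). congruence.
  - destruct (Nat.eq_dec (src G e) v); [congruence|]. rewrite (pt_tgt G HG) by (apply Hlen; auto). congruence.
Qed.

Lemma ce_range v e h : 0 < h < len G e -> 0 < ce v e h < len G e.
Proof. unfold ce; destruct Nat.eq_dec; lra. Qed.

Lemma ce_dist v e h : incident G v e -> 0 < h < len G e -> dist G (PE e (ce v e h)) (PV v) = h.
Proof.
  intros Hi Hh. pose proof Hi as [He _]. pose proof (ce_range v e h Hh).
  rewrite <- (pt_in G HG e) by lra. rewrite <- (pt_vcoord v e Hi).
  rewrite (Hdist G HG) by (auto; unfold ce, vcoord; destruct Nat.eq_dec; lra).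
  unfold ce, vcoord; destruct Nat.eq_dec; split_Rabs; lra.
Qed.

Lemma ce_exit v e h : incident G v e -> 0 < h < len G e -> exit_to G (PE e (ce v e h)) v h.
Proof.
  intros Hi Hh. simpl. unfold ce. destruct (inc_cases v e Hi) as [E|[E1 E2]].
  - destruct Nat.eq_dec; [|congruence]. left; auto.
  - destruct Nat.eq_dec; [congruence|]. right; split; [auto|ring].
Qed.

Lemma ce_exit_lb v e h w a : 0 < h <= len G e / 2 -> exit_to G (PE e (ce v e h)) w a -> h <= a.
Proof.
  intros Hh Hex. simpl in Hex. unfold ce in Hex. destruct Nat.eq_dec; destruct Hex as [[_ ->]|[_ ->]]; lra.
Qed.

Lemma edge_side v e phie phie1 : incident G v e -> C1_on_closed 0 (len G e) phie phie1 ->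
  phie (vcoord G v e) = u (PV v) -> (forall t, 0 <= t <= len G e -> u (pt G e t) <= phie t) ->
  forall eps, 0 < eps -> exists delta, 0 < delta /\ forall h, 0 < h < delta -> h < len G e ->
    u (PE e (ce v e h)) <= u (PV v) + h * ingoing_deriv G v e phie1 + eps * h.
Proof.
  intros Hi HC Hv Hb eps He. pose proof Hi as [He' _]. pose proof (Hlen G HG e He').
  assert (Hvc : 0 <= vcoord G v e <= len G e) by (unfold vcoord; destruct Nat.eq_dec; lra).
  destruct (HC _ Hvc) as [Hd _].
  destruct (deriv_upper _ _ _ Hd eps He) as [d [Hd0 Hd1]].
  exists d. split; auto. intros h Hh Hhl.
  pose proof (ce_range v e h ltac:(lra)).
  rewrite <- (pt_in G HG e (ce v e h)) by lra.
  eapply Rle_trans; [apply Hb; lra|].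
  unfold ce, ingoing_deriv, vcoord in *. destruct Nat.eq_dec.
  - specialize (Hd1 h). rewrite Rplus_0_l in Hd1. rewrite Rabs_right in Hd1 by lra.
    rewrite <- Hv. assert (phie h <= phie 0 + phie1 0 * h + eps * h) by (apply Hd1; lra). nra.
  - specialize (Hd1 (- h)). rewrite Rabs_Ropp, Rabs_right in Hd1 by lra.
    replace (len G e - h) with (len G e + - h) by ring. rewrite <- Hv.
    assert (phie (len G e + - h) <= phie (len G e) + phie1 (len G e) * - h + eps * h) by (apply Hd1; lra). nra.
Qed.

Lemma conv_vertex_visc : forall v e f, interior_vertex G v -> incident G v e -> incident G v f ->
     e <> f ->
     forall phie phie1 phif phif1,
       C1_on_closed 0 (len G e) phie phie1 ->
       C1_on_closed 0 (len G f) phif phif1 ->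
       phie (vcoord G v e) = u (PV v) -> phif (vcoord G v f) = u (PV v) ->
       (forall t, 0 <= t <= len G e -> u (pt G e t) <= phie t) ->
       (forall t, 0 <= t <= len G f -> u (pt G f t) <= phif t) ->
       0 <= ingoing_deriv G v e phie1 + ingoing_deriv G v f phif1.
Proof.
  intros v e f Hv Hie Hif Hef phie phie1 phif phif1 HCe HCf Hve Hvf Hbe Hbf.
  set (De := ingoing_deriv G v e phie1). set (Df := ingoing_deriv G v f phif1).
  destruct (Rle_lt_dec 0 (De + Df)) as [|HD]; auto. exfalso.
  set (eps := - (De + Df) / 4).
  assert (Heps : 0 < eps) by (unfold eps; lra).
  destruct (edge_side v e phie phie1 Hie HCe Hve Hbe eps Heps) as [de [Hde Hse]].
  destruct (edge_side v f phif phif1 Hif HCf Hvf Hbf eps Heps) as [df [Hdf Hsf]].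
  pose proof Hie as [He' _]. pose proof Hif as [Hf' _].
  pose proof (Hlen G HG e He') as Hle. pose proof (Hlen G HG f Hf') as Hlf.
  set (h := Rmin (Rmin de df) (Rmin (len G e) (len G f)) / 3).
  assert (Hm1 : Rmin (Rmin de df) (Rmin (len G e) (len G f)) <= Rmin de df) by apply Rmin_l.
  assert (Hm2 : Rmin (Rmin de df) (Rmin (len G e) (len G f)) <= Rmin (len G e) (len G f)) by apply Rmin_r.
  assert (Hm3 : 0 < Rmin (Rmin de df) (Rmin (len G e) (len G f))) by (repeat apply Rmin_glb_lt; auto).
  pose proof (Rmin_l de df). pose proof (Rmin_r de df). pose proof (Rmin_l (len G e) (len G f)). pose proof (Rmin_r (len G e) (len G f)).
  assert (Hh : 0 < h) by (unfold h; lra).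
  assert (Hhe : h < de /\ h < df /\ h <= len G e / 2 /\ h <= len G f / 2) by (unfold h; lra).
  set (x := PE e (ce v e h)). set (y := PE f (ce v f h)).
  pose proof (ce_range v e h ltac:(lra)). pose proof (ce_range v f h ltac:(lra)).
  assert (Vx : valid_point G x) by (simpl; split; auto; lra).
  assert (Vy : valid_point G y) by (simpl; split; auto; lra).
  assert (Vz : valid_point G (PV v)) by (destruct Hv; simpl; auto).
  assert (Dxz : dist G x (PV v) = h) by (apply ce_dist; auto; lra).
  assert (Dyz : dist G y (PV v) = h) by (apply ce_dist; auto; lra).
  assert (Dzy : dist G (PV v) y = h) by (rewrite (dist_sym G); auto).
  assert (Dxy : dist G x y = 2 * h).
  { destruct (dist_facts G HG x y Vx Vy) as [_ [D1 [_ D3]]].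
    apply Rle_antisym.
    - replace (2 * h) with (h + 0 + h) by ring. apply D1. left. exists v, v, h, h, 0.
      repeat split; try apply ce_exit; auto; try lra. constructor. destruct Hv; auto.
    - apply D3. intros r [[vx [vy [a [b [r' [K1 [K2 [K3 ->]]]]]]]]|[e' [t' [s [E1 [E2 _]]]]]].
      + pose proof (ce_exit_lb v e h vx a ltac:(lra) K1). pose proof (ce_exit_lb v f h vy b ltac:(lra) K2).
        pose proof (walk_nonneg G HG _ _ _ K3). lra.
      + unfold x, y in *. inversion E1; inversion E2; subst. congruence. }
  pose proof (Hconv x y (PV v) Vx Vy Vz) as K.
  rewrite Dyz, Dxz, Dxy in K.
  replace (h / (2 * h)) with (/ 2) in K by (field; lra).
  assert (Hxy : x <> y) by (unfold x, y; intro E; inversion E; congruence).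
  specialize (K Hxy). unfold in_segment in K. rewrite Dxz, Dzy, Dxy in K. specialize (K ltac:(ring)).
  pose proof (Hse h ltac:(lra) ltac:(lra)). pose proof (Hsf h ltac:(lra) ltac:(lra)).
  fold x y De Df in H5, H6. unfold eps in *. nra.
Qed.

Lemma forward : viscosity_subsolution G u.
Proof.
  split; [apply conv_usc|]. split.
  - intros. eapply conv_edge_visc; eauto.
  - intros. eapply conv_vertex_visc; eauto.
Qed.

End Forward.


Definition seg := (nat * R * R)%type.

Section Tracks.
Variable G : graph_data.
Hypothesis HG : is_metric_graph G.
Set Default Proof Using "All".

Definition segok (s : seg) : Prop :=
  let '(e, a, b) := s in (e < nE G)%nat /\ 0 <= a <= len G e /\ 0 <= b <= len G e /\ a <> b.

Fixpoint tlen (T : list seg) : R :=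
  match T with nil => 0 | (e, a, b) :: T' => Rabs (b - a) + tlen T' end.

Fixpoint trk (p : point) (T : list seg) (q : point) : Prop :=
  match T with
  | nil => p = q
  | (e, a, b) :: T' => segok (e, a, b) /\ pt G e a = p /\ trk (pt G e b) T' q
  end.

Fixpoint nb (T : list seg) : Prop :=
  match T with
  | (e, a, b) :: (((e', a', b') :: _) as T') => (e <> e' \/ (b - a) * (b' - a') > 0) /\ nb T'
  | _ => True
  end.

Fixpoint vj (T : list seg) : Prop :=
  match T with
  | (e, a, b) :: ((_ :: _) as T') => (b = 0 \/ b = len G e) /\ vj T'
  | _ => True
  end.

Fixpoint endsv (T : list seg) : Prop :=
  match T with
  | nil => True
  | (e, a, b) :: nil => b = 0 \/ b = len G e
  | _ :: T' => endsv T'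
  end.

Definition full (s : seg) : Prop := let '(e, a, b) := s in (a = 0 \/ a = len G e) /\ (b = 0 \/ b = len G e).

Lemma tlen_app T1 T2 : tlen (T1 ++ T2) = tlen T1 + tlen T2.
Proof. induction T1 as [|[[e a] b] T1 IH]; simpl; [ring|rewrite IH; ring]. Qed.

Lemma tlen_nonneg T : 0 <= tlen T.
Proof. induction T as [|[[e a] b] T IH]; simpl; [lra|pose proof (Rabs_pos (b - a)); lra]. Qed.

Lemma trk_app p m q T1 T2 : trk p T1 m -> trk m T2 q -> trk p (T1 ++ T2) q.
Proof.
  revert p. induction T1 as [|[[e a] b] T1 IH]; simpl; intros p H1 H2.
  - subst; auto.
  - destruct H1 as [H1 [H1' H1'']]. split; [auto|split; [auto|]]. eapply IH; eauto.
Qed.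

Lemma trk_app_inv p q T1 T2 : trk p (T1 ++ T2) q -> exists m, trk p T1 m /\ trk m T2 q.
Proof.
  revert p. induction T1 as [|[[e a] b] T1 IH]; simpl; intros p H.
  - exists p; auto.
  - destruct H as [H1 [H2 H3]]. destruct (IH _ H3) as [m [Hm1 Hm2]]. exists m; auto.
Qed.

Lemma vj_app T1 T2 : vj T1 -> vj T2 -> endsv T1 -> vj (T1 ++ T2).
Proof.
  induction T1 as [|[[e a] b] T1 IH]; simpl; intros H1 H2 H3; auto.
  destruct T1 as [|s1 T1].
  - simpl. destruct T2; auto.
  - destruct H1 as [H1 H1']. change ((b = 0 \/ b = len G e) /\ vj ((s1 :: T1) ++ T2)). split; auto.
Qed.

Lemma vj_app_inv T1 T2 : vj (T1 ++ T2) -> T1 <> nil -> T2 <> nil -> endsv T1 /\ vj T1 /\ vj T2.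
Proof.
  induction T1 as [|[[e a] b] T1 IH]; intros H Hn1 Hn2; [congruence|].
  destruct T1 as [|s1 T1].
  - destruct T2 as [|s2 T2]; [congruence|]. simpl in H. destruct H as [H H']. simpl. auto.
  - simpl in H. destruct H as [H H']. destruct (IH H' ltac:(congruence) Hn2) as [A [B C]].
    split; [|split]; auto. simpl. auto.
Qed.

Lemma full_vj T : List.Forall full T -> vj T /\ endsv T.
Proof.
  induction 1 as [|[[e a] b] T Hs HT IH]; simpl; auto.
  destruct Hs as [_ Hb]. destruct T as [|s T]; simpl; auto. destruct IH; split; auto.
Qed.

Lemma trk_endsv_vertex p T m : trk p T m -> endsv T -> T <> nil -> exists v, m = PV v.
Proof.
  revert p. induction T as [|[[e a] b] T IH]; intros p H Hv Hn; [congruence|].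
  simpl in H. destruct H as [[He [Ha [Hb Hab]]] [Hp HT]].
  destruct T as [|s T].
  - simpl in HT. subst m. simpl in Hv. destruct Hv as [->| ->].
    + exists (src G e). apply (pt_src G HG).
    + exists (tgt G e). apply (pt_tgt G HG). apply (Hlen G HG); auto.
  - apply (IH _ HT); auto. congruence.
Qed.

Lemma walk_track v w r : walk G v w r ->
  exists T, trk (PV v) T (PV w) /\ tlen T = r /\ List.Forall full T.
Proof.
  induction 1 as [v Hv|v w e r He Hs Hw IH|v w e r He Ht Hw IH].
  - exists nil. simpl. auto.
  - destruct IH as [T [H1 [H2 H3]]]. pose proof (Hlen G HG e He).
    exists ((e, 0, len G e) :: T). simpl. repeat split; auto; try lra.
    + rewrite (pt_src G HG). congruence.
    + rewrite (pt_tgt G HG) by auto. auto.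
    + rewrite H2. rewrite Rminus_0_r, Rabs_right by lra. auto.
    + constructor; auto. simpl. auto.
  - destruct IH as [T [H1 [H2 H3]]]. pose proof (Hlen G HG e He).
    exists ((e, len G e, 0) :: T). simpl. repeat split; auto; try lra.
    + rewrite (pt_tgt G HG) by auto. congruence.
    + rewrite (pt_src G HG). auto.
    + rewrite H2. rewrite Rminus_0_l, Rabs_Ropp, Rabs_right by lra. auto.
    + constructor; auto. simpl. auto.
Qed.

Lemma exit_track x v a : valid_point G x -> exit_to G x v a ->
  exists T, trk x T (PV v) /\ tlen T = a /\ vj T /\ endsv T.
Proof.
  intros Hx Hex. destruct x as [w|e t]; simpl in Hex.
  - destruct Hex as [-> ->]. exists nil. simpl. auto.
  - destruct Hx as [He Ht]. destruct Hex as [[-> ->]|[-> ->]].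
    + exists ((e, t, 0) :: nil). simpl. repeat split; auto; try lra.
      * rewrite (pt_in G HG) by lra. auto.
      * apply (pt_src G HG).
      * split_Rabs; lra.
    + exists ((e, t, len G e) :: nil). simpl. repeat split; auto; try lra.
      * rewrite (pt_in G HG) by lra. auto.
      * apply (pt_tgt G HG); lra.
      * split_Rabs; lra.
Qed.

Lemma enter_track y v b : valid_point G y -> exit_to G y v b ->
  exists T, trk (PV v) T y /\ tlen T = b /\ vj T.
Proof.
  intros Hy Hex. destruct y as [w|e t]; simpl in Hex.
  - destruct Hex as [-> ->]. exists nil. simpl. auto.
  - destruct Hy as [He Ht]. destruct Hex as [[-> ->]|[-> ->]].
    + exists ((e, 0, t) :: nil). simpl. repeat split; auto; try lra.
      * apply (pt_src G HG).
      * rewrite (pt_in G HG) by lra. auto.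
      * split_Rabs; lra.
    + exists ((e, len G e, t) :: nil). simpl. repeat split; auto; try lra.
      * apply (pt_tgt G HG); lra.
      * rewrite (pt_in G HG) by lra. auto.
      * split_Rabs; lra.
Qed.

Lemma pl_track x y r : valid_point G x -> valid_point G y -> x <> y -> path_length G x y r ->
  exists T, trk x T y /\ tlen T = r /\ vj T.
Proof.
  intros Hx Hy Hne [[vx [vy [a [b [r' [H1 [H2 [H3 ->]]]]]]]]|[e [t [s [-> [-> ->]]]]]].
  - destruct (exit_track x vx a Hx H1) as [T1 [A1 [B1 [C1 D1]]]].
    destruct (walk_track vx vy r' H3) as [T2 [A2 [B2 C2]]].
    destruct (enter_track y vy b Hy H2) as [T3 [A3 [B3 C3]]].
    destruct (full_vj T2 C2) as [V2 E2].
    exists (T1 ++ (T2 ++ T3)). split; [|split].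
    + eapply trk_app; eauto. eapply trk_app; eauto.
    + rewrite !tlen_app. lra.
    + apply vj_app; auto. apply vj_app; auto.
  - simpl in Hx, Hy. destruct Hx as [He Ht]. destruct Hy as [_ Hs].
    exists ((e, t, s) :: nil). simpl. repeat split; auto; try lra.
    + intro E; apply Hne; subst; auto.
    + rewrite (pt_in G HG) by lra. auto.
    + rewrite (pt_in G HG) by lra. auto.
    + rewrite Rabs_minus_sym. ring.
Qed.

Lemma prepend_nb n : forall T0, (length T0 <= n)%nat -> forall e a b q,
  segok (e, a, b) -> trk (pt G e b) T0 q -> nb T0 -> vj ((e, a, b) :: T0) ->
  exists T, trk (pt G e a) T q /\ nb T /\ tlen T <= Rabs (b - a) + tlen T0 /\ vj T.
Proof.
  induction n as [|n IH]; intros T0 HlenT e a b q Hs Ht Hnb Hvj.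
  - destruct T0; [|simpl in HlenT; lia]. exists ((e, a, b) :: nil).
    split; [simpl; split; [exact Hs|split; [auto|exact Ht]]|]. simpl. split; [auto|split; [lra|auto]].
  - destruct T0 as [|[[e' a'] b'] T1].
    + exists ((e, a, b) :: nil).
      split; [simpl; split; [exact Hs|split; [auto|exact Ht]]|]. simpl. split; [auto|split; [lra|auto]].
    + destruct (classic (e <> e' \/ (b - a) * (b' - a') > 0)) as [Hok|Hbad].
      * exists ((e, a, b) :: (e', a', b') :: T1). split; [|split; [|split]]; auto.
        -- simpl. simpl in Ht. split; auto.
        -- change ((e <> e' \/ (b - a) * (b' - a') > 0) /\ nb ((e', a', b') :: T1)). split; auto.
        -- simpl tlen. lra.
      * assert (Hee : e = e') by (apply NNPP; intro; apply Hbad; auto).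
        assert (Hdir : (b - a) * (b' - a') <= 0) by (destruct (Rle_lt_dec ((b - a) * (b' - a')) 0); auto; exfalso; apply Hbad; auto).
        subst e'. simpl in Ht. destruct Ht as [[He [Ha' [Hb' Hab']]] [Hpt Ht1]].
        destruct Hs as [_ [Ha [Hb Hab]]].
        assert (a' = b) by (apply (pt_inj G HG e); auto). subst a'.
        assert (Hnb1 : nb T1) by (destruct T1 as [|[[e2 a2] b2] T2]; simpl in Hnb; [auto|tauto]).
        destruct (Req_dec a b') as [Eab|Nab].
        -- subst b'. exists T1. split; [auto|split; [auto|split]].
           ++ simpl tlen. pose proof (Rabs_pos (b - a)); pose proof (Rabs_pos (a - b)); lra.
           ++ simpl in Hvj. destruct T1; simpl; auto; tauto.
        -- assert (P1 : segok (e, a, b')) by (simpl; repeat split; auto; lra).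
           assert (P2 : vj ((e, a, b') :: T1)) by (simpl in Hvj; destruct T1 as [|s1 T1]; simpl; auto; tauto).
           destruct (IH T1 ltac:(simpl in HlenT; lia) e a b' q P1 Ht1 Hnb1 P2) as [T [A [B [C D]]]].
           exists T. split; auto. split; auto. split; auto. simpl tlen.
           assert (Rabs (b' - a) <= Rabs (b - a) + Rabs (b' - b)) by (split_Rabs; lra). lra.
Qed.

Lemma reduce T : forall p q, trk p T q -> vj T ->
  exists T', trk p T' q /\ nb T' /\ tlen T' <= tlen T /\ vj T' /\ (T = nil -> T' = nil).
Proof.
  induction T as [|[[e a] b] T IH]; intros p q H Hv.
  - exists nil. simpl in *. repeat split; auto; lra.
  - simpl in H. destruct H as [Hs [Hp HT]].
    assert (HvT : vj T) by (destruct T; simpl in Hv; [auto|tauto]).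
    destruct (IH _ _ HT HvT) as [T0 [A [B [C [D E]]]]].
    assert (Hv0 : vj ((e, a, b) :: T0)).
    { destruct T0 as [|s0 T0]; simpl; auto. destruct T as [|s T].
      - specialize (E eq_refl). congruence.
      - simpl in Hv. split; [tauto|auto]. }
    destruct (prepend_nb (length T0) T0 (le_n _) e a b q Hs A B Hv0) as [T' [A' [B' [C' D']]]].
    exists T'. subst p. split; auto. split; auto. split; [simpl tlen; lra|]. split; auto. congruence.
Qed.

End Tracks.

Definition sg (a b : R) : R := if Rle_dec a b then 1 else -1.

Lemma sg_abs a b : sg a b * Rabs (b - a) = b - a.
Proof. unfold sg; destruct Rle_dec; split_Rabs; lra. Qed.

Lemma sg_sq a b : sg a b * sg a b = 1.
Proof. unfold sg; destruct Rle_dec; lra. Qed.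

Lemma sg_pm a b : sg a b = 1 \/ sg a b = -1.
Proof. unfold sg; destruct Rle_dec; auto. Qed.

Lemma seg_coord a b L s : 0 <= a <= L -> 0 <= b <= L -> 0 <= s <= Rabs (b - a) -> 0 <= a + sg a b * s <= L.
Proof. intros. unfold sg in *; destruct Rle_dec; split_Rabs; nra. Qed.

Lemma seg_coord_strict a b L s : 0 <= a <= L -> 0 <= b <= L -> 0 < s < Rabs (b - a) -> 0 < a + sg a b * s < L.
Proof. intros. unfold sg in *; destruct Rle_dec; split_Rabs; nra. Qed.

Lemma sg_dir a b a' b' : a <> b -> a' <> b' -> (b - a) * (b' - a') > 0 -> sg a b = sg a' b'.
Proof. intros. unfold sg; destruct Rle_dec; destruct Rle_dec; auto; exfalso; nra. Qed.

Ltac ul := repeat match goal with x := _ |- _ => subst x end.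

Section Pos.
Variable G : graph_data.
Hypothesis HG : is_metric_graph G.
Set Default Proof Using "All".

Fixpoint pos (T : list seg) (s : R) : point :=
  match T with
  | nil => PV 0
  | (e, a, b) :: T' => if Rle_dec s (Rabs (b - a)) then pt G e (a + sg a b * s) else pos T' (s - Rabs (b - a))
  end.

Fixpoint jn (T : list seg) : list R :=
  match T with
  | nil => nil
  | (e, a, b) :: T' => match T' with nil => nil | _ => Rabs (b - a) :: map (Rplus (Rabs (b - a))) (jn T') end
  end.

Lemma pos_first e a b T' s : s <= Rabs (b - a) -> pos ((e, a, b) :: T') s = pt G e (a + sg a b * s).
Proof. intros H. simpl. destruct Rle_dec; [auto|lra]. Qed.

Lemma pos_rest p q e a b T' s : trk G p ((e, a, b) :: T') q -> T' <> nil -> Rabs (b - a) <= s ->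
  pos ((e, a, b) :: T') s = pos T' (s - Rabs (b - a)).
Proof.
  intros H Hn Hs. simpl. destruct Rle_dec as [Hl|Hl]; auto.
  assert (s = Rabs (b - a)) by lra. subst s. rewrite Rminus_diag.
  destruct T' as [|[[e' a'] b'] T'']; [congruence|]. simpl.
  destruct Rle_dec as [_|Hl']; [|exfalso; pose proof (Rabs_pos (b' - a')); lra].
  rewrite Rmult_0_r, Rplus_0_r. rewrite sg_abs. replace (a + (b - a)) with b by ring.
  simpl in H. destruct H as [_ [_ [_ [H _]]]]. auto.
Qed.

Lemma trk_valid p T q : trk G p T q -> T <> nil -> valid_point G p /\ valid_point G q.
Proof.
  revert p. induction T as [|[[e a] b] T IH]; intros p H Hn; [congruence|].
  simpl in H. destruct H as [[He [Ha [Hb Hab]]] [Hp HT]]. subst p.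
  split; [apply (pt_valid G HG); auto|].
  destruct T as [|s T]. simpl in HT. subst. apply (pt_valid G HG); auto.
  apply (IH _ HT). congruence.
Qed.

Lemma seg_pos_ab p e a b T q : trk G p ((e, a, b) :: T) q -> 0 < Rabs (b - a).
Proof. intros [[_ [_ [_ H]]] _]. apply Rabs_pos_lt. lra. Qed.

Lemma pos_0 p T q : trk G p T q -> T <> nil -> pos T 0 = p.
Proof.
  destruct T as [|[[e a] b] T]; intros H Hn; [congruence|].
  rewrite pos_first by (apply Rabs_pos). rewrite Rmult_0_r, Rplus_0_r. apply H.
Qed.

Lemma pos_L p T q : trk G p T q -> T <> nil -> pos T (tlen T) = q.
Proof.
  revert p. induction T as [|[[e a] b] T IH]; intros p H Hn; [congruence|].
  destruct T as [|s T].
  - simpl tlen. rewrite Rplus_0_r. rewrite pos_first by lra. rewrite sg_abs.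
    replace (a + (b - a)) with b by ring. simpl in H. tauto.
  - change (tlen ((e, a, b) :: s :: T)) with (Rabs (b - a) + tlen (s :: T)).
    rewrite (pos_rest p q) by (auto; try congruence; pose proof (tlen_nonneg G HG (s :: T)); lra).
    replace (Rabs (b - a) + tlen (s :: T) - Rabs (b - a)) with (tlen (s :: T)) by ring.
    apply (IH (pt G e b)). simpl in H; tauto. congruence.
Qed.

Lemma pos_lip p T q : trk G p T q -> T <> nil -> forall s, 0 <= s <= tlen T ->
  valid_point G (pos T s) /\ dist G p (pos T s) <= s /\ dist G (pos T s) q <= tlen T - s.
Proof.
  revert p. induction T as [|[[e a] b] T IH]; intros p H Hn s Hs; [congruence|].
  pose proof (trk_valid _ _ _ H Hn) as [Vp Vq].
  pose proof H as [[He [Ha [Hb Hab]]] [Hp HT]]. subst p.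
  set (l := Rabs (b - a)). assert (Hl : 0 < l) by (apply Rabs_pos_lt; lra).
  assert (Vb : valid_point G (pt G e b)) by (apply (pt_valid G HG); auto).
  assert (Hbq : dist G (pt G e b) q <= tlen T).
  { destruct T as [|s' T']. simpl in HT. subst q. rewrite (dist_self G HG) by auto. simpl; lra.
    destruct (IH _ HT ltac:(congruence) 0) as [_ [_ H3]]. split; [lra|apply (tlen_nonneg G HG)].
    rewrite (pos_0 _ _ _ HT) in H3 by congruence. lra. }
  simpl tlen in Hs |- *. fold l in Hs |- *.
  destruct (Rle_lt_dec s l) as [Hsl|Hsl].
  - rewrite pos_first by auto.
    assert (Hc : 0 <= a + sg a b * s <= len G e) by (apply seg_coord; auto; fold l; lra).
    assert (Vc : valid_point G (pt G e (a + sg a b * s))) by (apply (pt_valid G HG); auto).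
    split; [auto|split].
    + rewrite (Hdist G HG) by auto. replace (a - (a + sg a b * s)) with (- (sg a b * s)) by ring.
      rewrite Rabs_Ropp, Rabs_mult. destruct (sg_pm a b) as [E|E]; rewrite E; split_Rabs; lra.
    + eapply Rle_trans; [apply (dist_triangle G HG _ (pt G e b)); auto|].
      rewrite (Hdist G HG) by auto.
      assert (Rabs (a + sg a b * s - b) = l - s).
      { unfold l in *. unfold sg; destruct Rle_dec; split_Rabs; lra. }
      lra.
  - destruct T as [|s' T']. simpl tlen in Hs. lra.
    rewrite (pos_rest (pt G e a) q) by (auto; try congruence; unfold l in *; lra). fold l.
    destruct (IH _ HT ltac:(congruence) (s - l)) as [A [B C]]; [lra|].
    split; [auto|split].
    + eapply Rle_trans; [apply (dist_triangle G HG _ (pt G e b)); auto|].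
      rewrite (Hdist G HG) by auto. fold l. rewrite Rabs_minus_sym. fold l. lra.
    + lra.
Qed.

Lemma dist_le_tlen p T q : trk G p T q -> T <> nil -> dist G p q <= tlen T.
Proof.
  intros H Hn. destruct (pos_lip p T q H Hn 0) as [_ [_ C]]. split; [lra|apply (tlen_nonneg G HG)].
  rewrite (pos_0 _ _ _ H Hn) in C. lra.
Qed.

Lemma jn_range p T q : trk G p T q -> forall x, In x (jn T) -> 0 <= x <= tlen T.
Proof.
  revert p. induction T as [|[[e a] b] T IH]; intros p H x Hx; simpl in Hx; [contradiction|].
  destruct T as [|s T]; [contradiction|].
  simpl in H. destruct H as [_ [_ HT]]. pose proof (tlen_nonneg G HG (s :: T)).
  pose proof (Rabs_pos (b - a)).
  change (tlen ((e, a, b) :: s :: T)) with (Rabs (b - a) + tlen (s :: T)).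
  destruct Hx as [<-|Hx]. lra.
  apply in_map_iff in Hx. destruct Hx as [y [<- Hy]]. specialize (IH _ HT y Hy). lra.
Qed.

Definition LS (T : list seg) (L s0 : R) : Prop :=
  exists d e1 s1 t1 e2 s2 t2, 0 < d /\ (e1 < nE G)%nat /\ (e2 < nE G)%nat /\
    (s1 = 1 \/ s1 = -1) /\ (s2 = 1 \/ s2 = -1) /\
    pos T s0 = pt G e1 t1 /\ pos T s0 = pt G e2 t2 /\
    (forall s, s0 - d <= s <= s0 -> 0 <= s ->
       pos T s = pt G e1 (t1 - s1 * (s0 - s)) /\ 0 <= t1 - s1 * (s0 - s) <= len G e1) /\
    (forall s, s0 <= s <= s0 + d -> s <= L ->
       pos T s = pt G e2 (t2 + s2 * (s - s0)) /\ 0 <= t2 + s2 * (s - s0) <= len G e2) /\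
    (0 < s0 < L -> e1 = e2 -> s1 = s2) /\
    (0 < s0 < L -> ~ In s0 (jn T) -> e1 = e2 /\ s1 = s2 /\ t1 = t2 /\ 0 < t1 < len G e1).

Lemma LS_holds T : forall p q, trk G p T q -> nb T -> T <> nil ->
  forall s0, 0 <= s0 <= tlen T -> LS T (tlen T) s0.
Proof.
  induction T as [|[[e a] b] T IH]; intros p q H Hnb Hn s0 Hs0; [congruence|].
  pose proof H as [[He [Ha [Hb Hab]]] [Hp HT]].
  set (l := Rabs (b - a)). assert (Hl : 0 < l) by (apply Rabs_pos_lt; lra).
  set (sgm := sg a b).
  assert (Hcoord : forall s, 0 <= s <= l -> 0 <= a + sgm * s <= len G e) by (intros; apply seg_coord; auto).
  assert (Hstrict : forall s, 0 < s < l -> 0 < a + sgm * s < len G e) by (intros; apply seg_coord_strict; auto).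
  simpl tlen in Hs0 |- *. fold l in Hs0 |- *.
  destruct (classic (T = nil \/ s0 < l)) as [Hcase|Hcase].
  -
    set (d := if Rlt_dec s0 l then l - s0 else 1).
    assert (Hd : 0 < d) by (unfold d; destruct Rlt_dec; lra).
    assert (Hdr : forall s, s0 <= s <= s0 + d -> s <= l + tlen T -> s <= l).
    { intros s Hs1 Hs2. unfold d in Hs1. destruct Rlt_dec; [lra|].
      destruct Hcase as [->|]; [simpl in Hs2; lra|lra]. }
    assert (Hs0l : s0 <= l) by (destruct Hcase as [->|]; [simpl in Hs0; lra|lra]).
    exists d, e, sgm, (a + sgm * s0), e, sgm, (a + sgm * s0).
    split; [auto|split; [auto|split; [auto|split; [apply sg_pm|split; [apply sg_pm|]]]]].
    split; [apply pos_first; ul; lra|split; [apply pos_first; ul; lra|]].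
    split; [|split; [|split]].
    + intros s Hs1 Hs2. rewrite pos_first by (ul; lra).
      replace (a + sgm * s0 - sgm * (s0 - s)) with (a + sgm * s) by ring. split; auto. apply Hcoord; lra.
    + intros s Hs1 Hs2. specialize (Hdr s Hs1 Hs2). rewrite pos_first by (ul; lra).
      replace (a + sgm * s0 + sgm * (s - s0)) with (a + sgm * s) by ring. split; auto. apply Hcoord; lra.
    + auto.
    + intros Hs Hnin. split; auto. split; auto. split; auto. apply Hstrict.
      split; [lra|]. destruct Hcase as [->|]; [simpl in Hs; lra|lra].
  - apply not_or_and in Hcase. destruct Hcase as [HTn Hsl].
    destruct T as [|[[e' a'] b'] T']; [congruence|].
    pose proof HT as [[He' [Ha' [Hb' Hab']]] [Hp' HT']].
    set (l' := Rabs (b' - a')). assert (Hl' : 0 < l') by (apply Rabs_pos_lt; lra).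
    assert (Hnb' : nb ((e', a', b') :: T')) by (simpl in Hnb; tauto).
    destruct (Req_dec s0 l) as [Heq|Hneq].
    +
      subst s0. set (d := Rmin l l').
      assert (Hd : 0 < d) by (apply Rmin_glb_lt; auto).
      assert (Hbend : a + sgm * l = b) by (unfold sgm, l; rewrite sg_abs; ring).
      exists d, e, sgm, b, e', (sg a' b'), a'.
      split; [auto|split; [auto|split; [auto|split; [apply sg_pm|split; [apply sg_pm|]]]]].
      split; [rewrite pos_first by (ul; lra); fold sgm; rewrite Hbend; auto|].
      split; [rewrite (pos_rest p q) by (auto; try congruence; ul; lra); rewrite Rminus_diag;
              rewrite pos_first by (ul; lra); rewrite Rmult_0_r, Rplus_0_r; auto|].
      split; [|split; [|split]].
      * intros s Hs1 Hs2. rewrite pos_first by (ul; lra).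
        replace (b - sgm * (l - s)) with (a + sgm * s) by (rewrite <- Hbend; ring). split; auto.
        apply Hcoord. pose proof (Rmin_l l l'). unfold d in Hs1. lra.
      * intros s Hs1 Hs2. rewrite (pos_rest p q) by (auto; try congruence; ul; lra).
        pose proof (Rmin_r l l'). unfold d in Hs1.
        rewrite pos_first by (ul; lra). split; auto. apply seg_coord; auto. fold l'. lra.
      * intros _ Hee. subst e'. simpl in Hnb. destruct Hnb as [[Hne|Hpos] _]; [congruence|].
        unfold sgm. apply sg_dir; auto.
      * intros _ Hnin. exfalso. apply Hnin. simpl. left. auto.
    +
      assert (Hgt : l < s0) by lra.
      destruct (IH (pt G e b) q HT Hnb' ltac:(congruence) (s0 - l)) as
        [d [e1 [s1 [t1 [e2 [s2 [t2 [Hd [He1 [He2 [Hs1 [Hs2 [P1 [P2 [Left [Right [Nb Jn]]]]]]]]]]]]]]]]].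
      { split; [lra|]. lra. }
      set (d' := Rmin d (s0 - l)). assert (Hd' : 0 < d') by (apply Rmin_glb_lt; lra).
      pose proof (Rmin_l d (s0 - l)). pose proof (Rmin_r d (s0 - l)).
      assert (Hrest : forall s, l <= s -> pos ((e, a, b) :: (e', a', b') :: T') s = pos ((e', a', b') :: T') (s - l)).
      { intros s Hs. apply (pos_rest p q); auto; try congruence. }
      exists d', e1, s1, t1, e2, s2, t2.
      split; [auto|split; [auto|split; [auto|split; [auto|split; [auto|]]]]].
      split; [rewrite Hrest by lra; auto|split; [rewrite Hrest by lra; auto|]].
      split; [|split; [|split]].
      * intros s Hs1' Hs2'. rewrite Hrest by (unfold d' in Hs1'; lra).
        replace (s0 - s) with ((s0 - l) - (s - l)) by ring. apply Left; unfold d' in Hs1'; lra.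
      * intros s Hs1' Hs2'. rewrite Hrest by lra.
        replace (s - s0) with ((s - l) - (s0 - l)) by ring. apply Right; unfold d' in Hs1'; lra.
      * intros Hs. apply Nb. lra.
      * intros Hs Hnin. apply Jn. lra. intro Hin. apply Hnin. simpl. right.
        replace s0 with (l + (s0 - l)) by ring. apply in_map. auto.
Qed.

End Pos.

Section Conv.
Variable G : graph_data.
Hypothesis HG : is_metric_graph G.
Variable u : point -> R.
Hypothesis Hvisc : viscosity_subsolution G u.
Set Default Proof Using "All".

Lemma edge_bounded e : (e < nE G)%nat -> exists M, forall t, 0 <= t <= len G e -> u (pt G e t) <= M.
Proof.
  intros He. pose proof (Hlen G HG e He).
  apply usc1_bounded; [lra|].
  intros t Ht eps Heps. destruct Hvisc as [Husc _].
  destruct (Husc (pt G e t) (pt_valid G HG e t He Ht) eps Heps) as [d [Hd Hu]].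
  exists d. split; auto. intros s' Hs' Hd'. apply Hu. apply (pt_valid G HG); auto.
  rewrite (Hdist G HG) by auto. rewrite Rabs_minus_sym. auto.
Qed.

Lemma vertex_test e v t0 sgm d F0 beta C : (e < nE G)%nat -> 0 <= t0 <= len G e -> pt G e t0 = PV v ->
  0 < d -> (sgm = 1 \/ sgm = -1) ->
  (forall r, 0 <= r <= d -> 0 <= t0 + sgm * r <= len G e) ->
  (forall r, 0 <= r <= d -> u (pt G e (t0 + sgm * r)) <= F0 + beta * r + C * r ^ 2) ->
  F0 = u (PV v) ->
  incident G v e /\ exists phi phi1, C1_on_closed 0 (len G e) phi phi1 /\ phi (vcoord G v e) = u (PV v) /\
    (forall t, 0 <= t <= len G e -> u (pt G e t) <= phi t) /\ ingoing_deriv G v e phi1 = beta.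
Proof.
  intros He Ht0 Hv Hd Hs Hco Hb HF.
  destruct (Hedge G HG e He) as [_ [_ [Hne Hl]]].
  destruct (edge_bounded e He) as [M HM].
  pose proof (Hco d ltac:(lra)) as Hcod.
  assert (Hcase : (t0 = 0 /\ src G e = v /\ sgm = 1) \/ (t0 = len G e /\ tgt G e = v /\ sgm = -1)).
  { destruct (pt_vertex G HG e t0 v He Ht0 Hv) as [[-> E]|[-> E]].
    - left. split; auto. split; auto. destruct Hs as [->| ->]; lra.
    - right. split; auto. split; auto. destruct Hs as [->| ->]; lra. }
  split.
  { split; auto. destruct Hcase as [[_ [E _]]|[_ [E _]]]; auto. }
  set (K := (M - F0 + Rabs beta * len G e) / (d * d)).
  set (C' := Rmax (Rmax C 0) K).
  assert (HC1 : C <= C') by (unfold C'; eapply Rle_trans; [apply Rmax_l|apply Rmax_l]).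
  assert (HC2 : 0 <= C') by (unfold C'; eapply Rle_trans; [apply Rmax_r|apply Rmax_l]).
  assert (HC3 : K <= C') by (unfold C'; apply Rmax_r).
  exists (fun t => F0 + (beta * sgm) * (t - t0) + C' * (t - t0) ^ 2).
  exists (fun t => beta * sgm + 2 * C' * (t - t0)).
  split; [|split; [|split]].
  - intros t Ht. split. apply is_derive_quad.
    apply (ex_derive_continuous (fun t => beta * sgm + 2 * C' * (t - t0))). auto_derive. auto.
  - unfold vcoord. destruct Hcase as [[-> [E ->]]|[-> [E ->]]].
    + destruct Nat.eq_dec; [|congruence]. rewrite HF. ring.
    + destruct Nat.eq_dec; [congruence|]. rewrite HF. ring.
  - intros t Ht.
    set (r := sgm * (t - t0)).
    assert (Hr : 0 <= r <= len G e) by (unfold r; destruct Hcase as [[-> [_ ->]]|[-> [_ ->]]]; lra).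
    assert (Ht' : t = t0 + sgm * r) by (unfold r; destruct Hs as [-> | ->]; ring).
    assert (Hsq : (t - t0) ^ 2 = r ^ 2) by (unfold r; destruct Hs as [-> | ->]; ring).
    assert (Hlin : beta * sgm * (t - t0) = beta * r) by (unfold r; ring).
    rewrite Hsq, Hlin.
    destruct (Rle_lt_dec r d) as [Hrd|Hrd].
    + rewrite Ht'. specialize (Hb r ltac:(lra)). assert (C * r ^ 2 <= C' * r ^ 2) by (apply Rmult_le_compat_r; [apply pow2_ge_0|auto]). lra.
    + specialize (HM t Ht).
      assert (Hbr : - (Rabs beta * len G e) <= beta * r).
      { assert (Rabs (beta * r) <= Rabs beta * len G e) by (rewrite Rabs_mult; apply Rmult_le_compat_l; [apply Rabs_pos|split_Rabs; lra]).
        split_Rabs; lra. }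
      assert (Hdd : 0 < d * d) by nra.
      assert (HK : K * (d * d) = M - F0 + Rabs beta * len G e) by (unfold K; field; lra).
      assert (C' * (d * d) <= C' * r ^ 2) by (apply Rmult_le_compat_l; [auto|simpl; nra]).
      assert (K * (d * d) <= C' * (d * d)) by (apply Rmult_le_compat_r; lra).
      lra.
  - unfold ingoing_deriv. destruct Hcase as [[-> [E ->]]|[-> [E ->]]].
    + destruct Nat.eq_dec; [|congruence]. ring.
    + destruct Nat.eq_dec; [congruence|]. ring.
Qed.

Lemma track_convex x T y : trk G x T y -> nb T -> T <> nil ->
  forall s, 0 <= s <= tlen T -> u (pos G T s) <= (1 - s / tlen T) * u x + (s / tlen T) * u y.
Proof.
  intros Ht Hnb Hn.
  destruct Hvisc as [Husc [Hedv Hvert]].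
  assert (HL : 0 < tlen T).
  { destruct T as [|[[e a] b] T']; [congruence|]. simpl.
    pose proof (seg_pos_ab G HG x e a b T' y Ht). pose proof (tlen_nonneg G HG T'). lra. }
  set (f := fun s => u (pos G T s)).
  intros s Hs.
  rewrite <- (pos_0 G HG x T y Ht Hn). rewrite <- (pos_L G HG x T y Ht Hn).
  change (u (pos G T 0)) with (f 0). change (u (pos G T (tlen T))) with (f (tlen T)).
  change (u (pos G T s)) with (f s).
  remember (tlen T) as L eqn:HLdef.
  apply (max_principle f L (jn T) HL).
  - apply Forall_forall. intros z Hz. rewrite HLdef. apply (jn_range G HG x T y Ht z Hz).
  - intros s0 Hs0 eps Heps.
    destruct (LS_holds G HG T x y Ht Hnb Hn s0 ltac:(lra)) as
      [d [e1 [s1 [t1 [e2 [s2 [t2 [Hd [He1 [He2 [Hs1 [Hs2 [P1 [P2 [Left [Right [Nb Jn]]]]]]]]]]]]]]]]].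
    destruct (pos_lip G HG x T y Ht Hn s0 ltac:(lra)) as [V0 _].
    destruct (Husc _ V0 eps Heps) as [du [Hdu Hu]].
    exists (Rmin d du). split; [apply Rmin_glb_lt; auto|].
    intros s' Hs' Hss. pose proof (Rmin_l d du). pose proof (Rmin_r d du).
    unfold f. destruct (Rle_lt_dec s' s0) as [Hle|Hlt].
    + destruct (Left s' ltac:(split_Rabs; lra) ltac:(lra)) as [E1 R1].
      destruct (Left s0 ltac:(lra) ltac:(lra)) as [_ R0]. rewrite Rminus_diag, Rmult_0_r, Rminus_0_r in R0.
      rewrite E1. apply Hu. apply (pt_valid G HG); auto. rewrite P1. rewrite (Hdist G HG) by auto.
      replace (t1 - (t1 - s1 * (s0 - s'))) with (s1 * (s0 - s')) by ring.
      rewrite Rabs_mult. destruct Hs1 as [-> | ->]; split_Rabs; lra.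
    + destruct (Right s' ltac:(split_Rabs; lra) ltac:(lra)) as [E1 R1].
      destruct (Right s0 ltac:(lra) ltac:(lra)) as [_ R0]. rewrite Rminus_diag, Rmult_0_r, Rplus_0_r in R0.
      rewrite E1. apply Hu. apply (pt_valid G HG); auto. rewrite P2. rewrite (Hdist G HG) by auto.
      replace (t2 - (t2 + s2 * (s' - s0))) with (- (s2 * (s' - s0))) by ring.
      rewrite Rabs_Ropp, Rabs_mult. destruct Hs2 as [-> | ->]; split_Rabs; lra.
  - intros s0 Hs0.
    destruct (LS_holds G HG T x y Ht Hnb Hn s0 ltac:(lra)) as
      [d [e1 [s1 [t1 [e2 [s2 [t2 [Hd [He1 [He2 [Hs1 [Hs2 [P1 [P2 [Left [Right [Nb Jn]]]]]]]]]]]]]]]]].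
    destruct (pos_lip G HG x T y Ht Hn s0 ltac:(lra)) as [V0 _].
    destruct (Left s0 ltac:(lra) ltac:(lra)) as [_ R0]. rewrite Rminus_diag, Rmult_0_r, Rminus_0_r in R0.
    destruct (Right s0 ltac:(lra) ltac:(lra)) as [_ R0']. rewrite Rminus_diag, Rmult_0_r, Rplus_0_r in R0'.
    assert (Hvtx : forall v, pt G e1 t1 = PV v -> In s0 (jn T) /\ Qtwo f L s0).
    { intros v Ev.
      assert (Hne : e1 <> e2).
      { intro E. subst e2. specialize (Nb ltac:(lra) eq_refl). subst s2.
        assert (t2 = t1) by (apply (pt_inj G HG e1); auto; congruence). subst t2.
        set (h := Rmin d (Rmin s0 (L - s0)) / 2).
        pose proof (Rmin_l d (Rmin s0 (L - s0))). pose proof (Rmin_r d (Rmin s0 (L - s0))).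
        pose proof (Rmin_l s0 (L - s0)). pose proof (Rmin_r s0 (L - s0)).
        assert (0 < Rmin d (Rmin s0 (L - s0))) by (repeat apply Rmin_glb_lt; lra).
        destruct (Left (s0 - h) ltac:(unfold h; lra) ltac:(unfold h; lra)) as [_ Q1].
        destruct (Right (s0 + h) ltac:(unfold h; lra) ltac:(unfold h; lra)) as [_ Q2].
        replace (s0 - (s0 - h)) with h in Q1 by ring. replace (s0 + h - s0) with h in Q2 by ring.
        assert (0 < h) by (unfold h; lra).
        destruct (pt_vertex G HG e1 t1 v He1 R0 Ev) as [[-> _]|[-> _]]; destruct Hs1 as [-> | ->]; lra. }
      split.
      - apply NNPP; intro Hnin. destruct (Jn ltac:(lra) Hnin) as [_ [_ [_ Hint]]].
        rewrite (pt_in G HG) in Ev by lra. discriminate.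
      - intros C bL bR HR HLb.
        assert (Vv : (v < nV G)%nat) by (rewrite P1, Ev in V0; exact V0).
        assert (Ev2 : pt G e2 t2 = PV v) by congruence.
        set (d1 := Rmin d s0). set (d2 := Rmin d (L - s0)).
        assert (Hd1 : 0 < d1) by (apply Rmin_glb_lt; lra).
        assert (Hd2 : 0 < d2) by (apply Rmin_glb_lt; lra).
        pose proof (Rmin_l d s0). pose proof (Rmin_r d s0). pose proof (Rmin_l d (L - s0)). pose proof (Rmin_r d (L - s0)).
        assert (Hf0 : f s0 = u (PV v)) by (unfold f; rewrite P1, Ev; auto).
        destruct (vertex_test e1 v t1 (- s1) d1 (f s0) bL C He1 R0 Ev Hd1) as [Hi1 [phie [phie1 [A1 [B1 [C1 D1]]]]]].
        + destruct Hs1 as [-> | ->]; [right|left]; ring.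
        + intros r Hr. destruct (Left (s0 - r) ltac:(unfold d1 in *; lra) ltac:(unfold d1 in *; lra)) as [_ Q].
          replace (t1 + - s1 * r) with (t1 - s1 * (s0 - (s0 - r))) by ring. auto.
        + intros r Hr. destruct (Left (s0 - r) ltac:(unfold d1 in *; lra) ltac:(unfold d1 in *; lra)) as [Q _].
          replace (t1 + - s1 * r) with (t1 - s1 * (s0 - (s0 - r))) by ring. rewrite <- Q.
          specialize (HLb (s0 - r) ltac:(unfold d1 in *; lra)). unfold f in HLb.
          replace (s0 - (s0 - r)) with r in HLb by ring. replace ((s0 - r - s0) ^ 2) with (r ^ 2) in HLb by ring.
          exact HLb.
        + auto.
        + destruct (vertex_test e2 v t2 s2 d2 (f s0) bR C He2 R0' Ev2 Hd2) as [Hi2 [phif [phif1 [A2 [B2 [C2 D2]]]]]].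
          * auto.
          * intros r Hr. destruct (Right (s0 + r) ltac:(unfold d2 in *; lra) ltac:(unfold d2 in *; lra)) as [_ Q].
            replace (s0 + r - s0) with r in Q by ring. auto.
          * intros r Hr. destruct (Right (s0 + r) ltac:(unfold d2 in *; lra) ltac:(unfold d2 in *; lra)) as [Q _].
            replace (s0 + r - s0) with r in Q by ring. rewrite <- Q.
            specialize (HR (s0 + r) ltac:(unfold d2 in *; lra)). unfold f in HR.
            replace (s0 + r - s0) with r in HR by ring. exact HR.
          * auto.
          * rewrite <- D1, <- D2.
            assert (Hiv : interior_vertex G v) by (split; auto; exists e1, e2; auto).
            apply (Hvert v e1 e2 Hiv Hi1 Hi2 Hne phie phie1 phif phif1); auto. }
    destruct (pt_cases G HG e1 t1 He1 R0) as [[Ht1 Ev]|[[Ht1 Ev]|[Ht1 Ev]]].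
    1: { right. apply (Hvtx _ Ev). }
    1: { right. apply (Hvtx _ Ev). }
    1: {
      left. rewrite P1 in P2. rewrite Ev in P2. symmetry in P2.
      destruct (pt_edge G HG e2 t2 e1 t1 He2 R0' P2) as [E12 [E21 _]]. subst e2 t2.
      specialize (Nb ltac:(lra) eq_refl). subst s2.
      intros C beta Hb.
      set (dl := Rmin (Rmin d (Rmin s0 (L - s0))) (Rmin t1 (len G e1 - t1)) / 2).
      pose proof (Rmin_l (Rmin d (Rmin s0 (L - s0))) (Rmin t1 (len G e1 - t1))).
      pose proof (Rmin_r (Rmin d (Rmin s0 (L - s0))) (Rmin t1 (len G e1 - t1))).
      pose proof (Rmin_l d (Rmin s0 (L - s0))). pose proof (Rmin_r d (Rmin s0 (L - s0))).
      pose proof (Rmin_l s0 (L - s0)). pose proof (Rmin_r s0 (L - s0)).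
      pose proof (Rmin_l t1 (len G e1 - t1)). pose proof (Rmin_r t1 (len G e1 - t1)).
      assert (Hpos : 0 < Rmin (Rmin d (Rmin s0 (L - s0))) (Rmin t1 (len G e1 - t1))).
      { repeat apply Rmin_glb_lt; lra. }
      assert (Hdl : 0 < dl) by (unfold dl; lra).
      assert (H2C : 0 <= 2 * C); [|lra].
      apply (Hedv e1 t1 dl He1 Ht1 Hdl ltac:(unfold dl in *; lra) ltac:(unfold dl in *; lra)
        (fun t => f s0 + (beta * s1) * (t - t1) + C * (t - t1) ^ 2)
        (fun t => beta * s1 + 2 * C * (t - t1)) (fun _ => 2 * C)).
      + intros t _. split; [apply is_derive_quad|split].
        * auto_derive; [auto|ring].
        * apply continuous_const.
      + unfold f. rewrite P1, Ev. ring_simplify. auto.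
      + intros t Htt.
        set (sx := s0 + s1 * (t - t1)).
        assert (Hss : Rabs (sx - s0) = Rabs (t - t1)) by (unfold sx; replace (s0 + s1 * (t - t1) - s0) with (s1 * (t - t1)) by ring; rewrite Rabs_mult; destruct Hs1 as [-> | ->]; split_Rabs; lra).
        assert (Hst : Rabs (t - t1) < dl) by (split_Rabs; lra).
        assert (HsL : 0 <= sx <= L) by (split_Rabs; unfold dl in *; lra).
        assert (Hpt : pos G T sx = PE e1 t).
        { assert (Ec : t1 + s1 * (sx - s0) = t) by (unfold sx; replace (s0 + s1 * (t - t1) - s0) with (s1 * (t - t1)) by ring;
            replace (t1 + s1 * (s1 * (t - t1))) with (t1 + (s1 * s1) * (t - t1)) by ring;
            destruct Hs1 as [-> | ->]; ring).
          rewrite <- (pt_in G HG e1 t) by (unfold dl in *; split_Rabs; lra).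
          destruct (Rle_lt_dec sx s0).
          - destruct (Left sx ltac:(split_Rabs; unfold dl in *; lra) ltac:(lra)) as [E _].
            rewrite E. f_equal. rewrite <- Ec. ring.
          - destruct (Right sx ltac:(split_Rabs; unfold dl in *; lra) ltac:(lra)) as [E _].
            rewrite E. f_equal. auto. }
        specialize (Hb sx HsL). unfold f in Hb. rewrite Hpt in Hb.
        replace (sx - s0) with (s1 * (t - t1)) in Hb by (unfold sx; ring).
        replace (C * (s1 * (t - t1)) ^ 2) with (C * (s1 * s1) * (t - t1) ^ 2) in Hb by ring.
        replace (s1 * s1) with 1 in Hb by (destruct Hs1 as [-> | ->]; ring).
        eapply Rle_trans; [exact Hb|unfold f; right; ring]. }
  - auto.
Qed.

End Conv.

Section Back.
Variable G : graph_data.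
Hypothesis HG : is_metric_graph G.
Set Default Proof Using "All".

Lemma pos_app T1 T2 p m : trk G p T1 m -> T1 <> nil -> forall s, 0 <= s <= tlen T1 ->
  pos G (T1 ++ T2) s = pos G T1 s.
Proof.
  revert p. induction T1 as [|[[e a] b] T1 IH]; intros p H Hn s Hs; [congruence|].
  simpl app. simpl. destruct Rle_dec as [Hl|Hl]; auto.
  destruct T1 as [|s1 T1]. simpl in Hs. lra.
  simpl in H. destruct H as [_ [_ HT]]. apply (IH _ HT). congruence.
  change (tlen ((e, a, b) :: s1 :: T1)) with (Rabs (b - a) + tlen (s1 :: T1)) in Hs. lra.
Qed.

Lemma near_track p q eps : valid_point G p -> valid_point G q -> p <> q -> 0 < eps ->
  exists T, trk G p T q /\ nb T /\ vj G T /\ T <> nil /\ dist G p q <= tlen T < dist G p q + eps.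
Proof.
  intros Vp Vq Hne He.
  destruct (dist_facts G HG p q Vp Vq) as [_ [_ [D2 _]]].
  destruct (D2 eps He) as [r [Pr Hr]].
  destruct (pl_track G HG p q r Vp Vq Hne Pr) as [T0 [A0 [B0 C0]]].
  destruct (reduce G HG T0 p q A0 C0) as [T [A [B [C [D _]]]]].
  assert (Hn : T <> nil) by (intro E; subst T; simpl in A; congruence).
  exists T. repeat split; auto. apply (dist_le_tlen G HG p T q A Hn). lra.
Qed.

Lemma first_margin p e a b T q : trk G p ((e, a, b) :: T) q -> vj G ((e, a, b) :: T) ->
  Rmin (dist G p q) (Rmin (minlen G) (cm G p)) <= Rabs (b - a).
Proof.
  intros H Hv.
  pose proof (Rmin_l (dist G p q) (Rmin (minlen G) (cm G p))).
  pose proof (Rmin_r (dist G p q) (Rmin (minlen G) (cm G p))).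
  pose proof (Rmin_l (minlen G) (cm G p)). pose proof (Rmin_r (minlen G) (cm G p)).
  destruct T as [|s T].
  - pose proof (dist_le_tlen G HG p _ q H ltac:(congruence)). simpl in H4. lra.
  - simpl in Hv. destruct Hv as [Hb _].
    pose proof H as [[He [Ha [Hb' Hab]]] [Hp _]]. pose proof (minlen_le G HG e He).
    destruct (pt_cases G HG e a He Ha) as [[-> E]|[[-> E]|[Ha' E]]]; rewrite <- Hp, E in *; simpl cm in *.
    + destruct Hb as [->| ->]; [lra|]. split_Rabs; lra.
    + destruct Hb as [->| ->]; [|lra]. split_Rabs; lra.
    + pose proof (Rmin_l a (len G e - a)). pose proof (Rmin_r a (len G e - a)).
      destruct Hb as [->| ->]; split_Rabs; lra.
Qed.

Lemma last_margin p Ta e a b q : trk G p (Ta ++ (e, a, b) :: nil) q -> vj G (Ta ++ (e, a, b) :: nil) ->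
  Rmin (dist G p q) (Rmin (minlen G) (cm G q)) <= Rabs (b - a).
Proof.
  intros H Hv.
  pose proof (Rmin_l (dist G p q) (Rmin (minlen G) (cm G q))).
  pose proof (Rmin_r (dist G p q) (Rmin (minlen G) (cm G q))).
  pose proof (Rmin_l (minlen G) (cm G q)). pose proof (Rmin_r (minlen G) (cm G q)).
  destruct (trk_app_inv G HG p q Ta _ H) as [m [Hm1 Hm2]].
  pose proof Hm2 as [[He [Ha [Hb' Hab]]] [Hpa Hq]]. simpl in Hq.
  destruct Ta as [|s Ta].
  - simpl in Hm1. subst m. pose proof (dist_le_tlen G HG p _ q Hm2 ltac:(congruence)). simpl in H4. lra.
  - destruct (vj_app_inv G HG _ _ Hv ltac:(congruence) ltac:(congruence)) as [Hend _].
    destruct (trk_endsv_vertex G HG _ _ _ Hm1 Hend ltac:(congruence)) as [v Ev].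
    rewrite Ev in Hpa. pose proof (minlen_le G HG e He).
    destruct (pt_vertex G HG e a v He Ha Hpa) as [[-> _]|[-> _]];
    destruct (pt_cases G HG e b He Hb') as [[-> E]|[[-> E]|[Hb2 E]]]; rewrite <- Hq, E in *; simpl cm in *;
    try lra; try (split_Rabs; lra);
    pose proof (Rmin_l b (len G e - b)); pose proof (Rmin_r b (len G e - b)); split_Rabs; lra.
Qed.

Lemma nb_app T1 e a b e' a' b' T2 : nb (T1 ++ (e, a, b) :: nil) -> nb ((e', a', b') :: T2) ->
  (e <> e' \/ (b - a) * (b' - a') > 0) -> nb (T1 ++ (e, a, b) :: (e', a', b') :: T2).
Proof.
  induction T1 as [|[[e1 a1] b1] T1 IH]; intros H1 H2 Hj.
  - simpl. split; auto.
  - destruct T1 as [|[[e2 a2] b2] T1].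
    + simpl in *. destruct H1 as [H1 _]. split; auto.
    + simpl in H1 |- *. destruct H1 as [H1 H1']. split; auto. apply IH; auto.
Qed.

Variable u : point -> R.
Hypothesis Hvisc : viscosity_subsolution G u.

Lemma dist_le_tlen' p T q : trk G p T q -> valid_point G p -> dist G p q <= tlen T.
Proof.
  intros H Vp. destruct T as [|s T].
  - simpl in H. subst q. rewrite (dist_self G HG) by auto. simpl; lra.
  - apply (dist_le_tlen G HG p _ q H). congruence.
Qed.

Lemma conv_eps x y z eps : valid_point G x -> valid_point G y -> valid_point G z -> x <> z -> z <> y ->
  in_segment G x y z -> 0 < eps -> eps < Rmin (Rmin (dist G x z) (dist G z y)) (Rmin (minlen G) (cm G z)) ->
  exists L1 L2, dist G x z <= L1 < dist G x z + eps /\ dist G z y <= L2 < dist G z y + eps /\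
    dist G x y <= L1 + L2 /\
    u z <= (1 - L1 / (L1 + L2)) * u x + (L1 / (L1 + L2)) * u y.
Proof.
  intros Vx Vy Vz Hxz Hzy Hsg He Hem. unfold in_segment in Hsg.
  set (m := Rmin (Rmin (dist G x z) (dist G z y)) (Rmin (minlen G) (cm G z))).
  pose proof (Rmin_l (Rmin (dist G x z) (dist G z y)) (Rmin (minlen G) (cm G z))).
  pose proof (Rmin_r (Rmin (dist G x z) (dist G z y)) (Rmin (minlen G) (cm G z))).
  pose proof (Rmin_l (dist G x z) (dist G z y)). pose proof (Rmin_r (dist G x z) (dist G z y)).
  pose proof (Rmin_l (minlen G) (cm G z)). pose proof (Rmin_r (minlen G) (cm G z)).
  destruct (near_track x z eps Vx Vz Hxz He) as [T1 [A1 [B1 [C1 [D1 E1]]]]].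
  destruct (near_track z y eps Vz Vy Hzy He) as [T2 [A2 [B2 [C2 [D2 E2]]]]].
  exists (tlen T1), (tlen T2).
  destruct (exists_last D1) as [T1a [[[e a] b] EqT1]].
  destruct T2 as [|[[e' a'] b'] T2b]; [congruence|].
  assert (M1 : m <= Rabs (b - a)).
  { subst T1. pose proof (last_margin x T1a e a b z A1 C1).
    assert (m <= Rmin (dist G x z) (Rmin (minlen G) (cm G z))) by (unfold m; apply Rmin_glb; [|apply Rmin_glb]; lra). lra. }
  assert (M2 : m <= Rabs (b' - a')).
  { pose proof (first_margin z e' a' b' T2b y A2 C2).
    assert (m <= Rmin (dist G z y) (Rmin (minlen G) (cm G z))) by (unfold m; apply Rmin_glb; [|apply Rmin_glb]; lra). lra. }
  subst T1. destruct (trk_app_inv G HG x z T1a _ A1) as [mm [Hm1 Hm2]].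
  pose proof Hm2 as [[He1 [Ha [Hb Hab]]] [Hpa Hz]]. simpl in Hz.
  pose proof A2 as [[He2 [Ha' [Hb' Hab']]] [Hpa' HT2b]].
  assert (Htot : trk G x (T1a ++ (e, a, b) :: (e', a', b') :: T2b) y).
  { replace (T1a ++ (e, a, b) :: (e', a', b') :: T2b) with ((T1a ++ (e, a, b) :: nil) ++ (e', a', b') :: T2b)
      by (rewrite <- app_assoc; auto).
    eapply (trk_app G HG); eauto. }
  assert (Hlen12 : tlen (T1a ++ (e, a, b) :: (e', a', b') :: T2b) = tlen (T1a ++ (e, a, b) :: nil) + tlen ((e', a', b') :: T2b)).
  { rewrite <- (tlen_app G HG). rewrite <- app_assoc. auto. }
  assert (Vxy : dist G x y <= tlen (T1a ++ (e, a, b) :: nil) + tlen ((e', a', b') :: T2b)).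
  { rewrite <- Hlen12. apply (dist_le_tlen G HG x _ y Htot). destruct T1a; simpl; congruence. }
  assert (Hj : e <> e' \/ (b - a) * (b' - a') > 0).
  { apply NNPP. intro Hbad. apply not_or_and in Hbad. destruct Hbad as [Hee Hd].
    apply NNPP in Hee. subst e'.
    assert (a' = b) by (apply (pt_inj G HG e); auto; congruence). subst a'.
    assert (Hopp : (b - a) * (b' - b) < 0).
    { assert ((b - a) * (b' - b) <> 0) by (apply Rmult_integral_contrapositive; split; lra). lra. }
    assert (Hshort : exists Ts, trk G x Ts y /\ tlen Ts = tlen T1a + Rabs (b' - a) + tlen T2b).
    { destruct (Req_dec a b') as [Eab|Nab].
      - subst b'. exists (T1a ++ T2b). split.
        + eapply (trk_app G HG); eauto. rewrite <- Hpa. auto.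
        + rewrite (tlen_app G HG). rewrite Rminus_diag, Rabs_R0. ring.
      - exists (T1a ++ (e, a, b') :: T2b). split.
        + eapply (trk_app G HG); eauto. simpl. split; [repeat split; auto; lra|]. split; auto.
        + rewrite (tlen_app G HG). simpl. ring. }
    destruct Hshort as [Ts [Hts Hlts]].
    pose proof (dist_le_tlen' x Ts y Hts Vx) as Hd1.
    assert (Hab2 : Rabs (b' - a) <= Rabs (b - a) + Rabs (b' - b) - 2 * m).
    { destruct (Rlt_le_dec 0 (b - a)) as [Hp|Hp].
      - assert (b' - b < 0) by nra. split_Rabs; lra.
      - assert (b - a < 0) by lra. assert (b' - b > 0) by nra. split_Rabs; lra. }
    rewrite (tlen_app G HG) in E1. cbn [tlen] in E1, E2. assert (eps < m) by exact Hem. lra. }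
  assert (Hnb : nb ((T1a ++ (e, a, b) :: nil) ++ (e', a', b') :: T2b)).
  { rewrite <- app_assoc. simpl. apply nb_app; auto. }
  assert (Htot' : trk G x ((T1a ++ (e, a, b) :: nil) ++ (e', a', b') :: T2b) y).
  { rewrite <- app_assoc. simpl. auto. }
  assert (Hn : (T1a ++ (e, a, b) :: nil) ++ (e', a', b') :: T2b <> nil) by (destruct T1a; simpl; congruence).
  assert (Hn1 : T1a ++ (e, a, b) :: nil <> nil) by (destruct T1a; simpl; congruence).
  pose proof (tlen_nonneg G HG (T1a ++ (e, a, b) :: nil)).
  pose proof (tlen_nonneg G HG ((e', a', b') :: T2b)).
  pose proof (track_convex G HG u Hvisc x _ y Htot' Hnb Hn (tlen (T1a ++ (e, a, b) :: nil))) as K.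
  rewrite (tlen_app G HG (T1a ++ (e, a, b) :: nil) ((e', a', b') :: T2b)) in K. specialize (K ltac:(lra)).
  rewrite (pos_app _ _ x z A1 Hn1) in K by (split; [apply (tlen_nonneg G HG)|apply Rle_refl]).
  pose proof (pos_L G HG x _ z A1 Hn1) as PL.
  split; [lra|]. split; [lra|]. split; [lra|].
  replace (u z) with (u (pos G (T1a ++ (e, a, b) :: nil) (tlen (T1a ++ (e, a, b) :: nil)))) by (f_equal; exact PL).
  exact K.
Qed.

Lemma backward : convex_on_graph G u.
Proof.
  intros x y z Vx Vy Vz Hxy Hsg.
  pose proof (dist_pos G HG x y Vx Vy Hxy) as HD.
  pose proof Hsg as Hsg'. unfold in_segment in Hsg'.
  rewrite (dist_sym G HG y z).
  destruct (classic (x = z)) as [<-|Hxz].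
  { rewrite (dist_self G HG) by auto. right. field. lra. }
  destruct (classic (z = y)) as [->|Hzy].
  { rewrite (dist_self G HG) by auto. right. field. lra. }
  set (d1 := dist G x z). set (d2 := dist G z y). set (D := dist G x y).
  assert (Hd1 : 0 < d1) by (apply (dist_pos G HG); auto).
  assert (Hd2 : 0 < d2) by (apply (dist_pos G HG); auto).
  set (m := Rmin (Rmin d1 d2) (Rmin (minlen G) (cm G z))).
  assert (Hm : 0 < m).
  { unfold m. repeat apply Rmin_glb_lt; auto. apply (minlen_pos G HG). apply (cm_pos G HG); auto. }
  set (W := u y - u x).
  assert (HDs : D = d1 + d2) by (unfold D, d1, d2; lra).
  replace (d2 / D * u x + d1 / D * u y) with (u x + d1 / D * W) by (unfold W; rewrite HDs; field; lra).
  apply le_epsilon. intros eta Heta.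
  set (eps := Rmin (m / 2) (eta * D / (2 * (Rabs W + 1)))).
  assert (Heps : 0 < eps).
  { unfold eps. apply Rmin_glb_lt. lra. apply Rdiv_lt_0_compat. nra. pose proof (Rabs_pos W); lra. }
  assert (Hem : eps < m) by (unfold eps; pose proof (Rmin_l (m / 2) (eta * D / (2 * (Rabs W + 1)))); lra).
  destruct (conv_eps x y z eps Vx Vy Vz Hxz Hzy Hsg Heps Hem) as [L1 [L2 [HL1 [HL2 [HL K]]]]].
  fold d1 d2 D in HL1, HL2, HL.
  replace ((1 - L1 / (L1 + L2)) * u x + L1 / (L1 + L2) * u y) with (u x + L1 / (L1 + L2) * W) in K
    by (unfold W; field; lra).
  assert (Hdiff : Rabs (L1 / (L1 + L2) - d1 / D) <= eps / D).
  { assert (E : L1 / (L1 + L2) - d1 / D = ((L1 - d1) * d2 - (L2 - d2) * d1) / ((L1 + L2) * D))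
      by (unfold D; rewrite <- Hsg'; fold d1 d2; field; lra).
    rewrite E. unfold Rdiv. rewrite Rabs_mult. rewrite Rabs_inv. rewrite (Rabs_right ((L1 + L2) * D)) by nra.
    assert (Hnum : Rabs ((L1 - d1) * d2 - (L2 - d2) * d1) <= eps * D).
    { unfold D. rewrite <- Hsg'. fold d1 d2.
      assert (0 <= (L1 - d1) * d2 <= eps * d2) by (split; nra).
      assert (0 <= (L2 - d2) * d1 <= eps * d1) by (split; nra).
      split_Rabs; nra. }
    apply Rle_trans with (eps * D * / ((L1 + L2) * D)).
    - apply Rmult_le_compat_r; auto. left; apply Rinv_0_lt_compat; nra.
    - assert (eps * D * / ((L1 + L2) * D) = eps / (L1 + L2)) by (field; lra).
      rewrite H. unfold Rdiv. apply Rmult_le_compat_l; [lra|]. apply Rinv_le_contravar; lra. }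
  assert (Hfin : (L1 / (L1 + L2) - d1 / D) * W <= eta / 2).
  { apply Rle_trans with (Rabs (L1 / (L1 + L2) - d1 / D) * Rabs W).
    - rewrite <- Rabs_mult. apply Rle_abs.
    - apply Rle_trans with (eps / D * Rabs W).
      + apply Rmult_le_compat_r; auto. apply Rabs_pos.
      + assert (eps <= eta * D / (2 * (Rabs W + 1))) by (unfold eps; apply Rmin_r).
        pose proof (Rabs_pos W).
        assert (eps / D * Rabs W <= eta * D / (2 * (Rabs W + 1)) / D * Rabs W).
        { apply Rmult_le_compat_r; auto. unfold Rdiv. apply Rmult_le_compat_r; auto. left; apply Rinv_0_lt_compat; lra. }
        assert (eta * D / (2 * (Rabs W + 1)) / D * Rabs W = eta / 2 * (Rabs W / (Rabs W + 1))) by (field; lra).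
        assert (Rabs W / (Rabs W + 1) <= 1).
        { unfold Rdiv. apply (Rmult_le_reg_r (Rabs W + 1)); [lra|]. rewrite Rmult_assoc, Rinv_l by lra. lra. }
        nra. }
  lra.
Qed.

End Back.

Theorem theorem2p1 (G : graph_data) (u : point -> R) :
  is_metric_graph G ->
  (convex_on_graph G u <-> viscosity_subsolution G u).
Proof.
  intros HG. split.
  - intros Hc. apply (forward G HG u Hc).
  - intros Hv. apply (backward G HG u Hv).
Qed.
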